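(* Let $k,l$ be positive integers. For $\operatorname{Re}s>1$, $$\sum_{n_{l+1}\mid n_l^k\mid\cdots\mid n_1^k}(n_1^k\cdots n_l^k\,n_{l+1})^{-s}=F_{k,l}(s)\prod_{j=2}^{l+1}\zeta(jks).$$
   Context: The sum is over all $(l+1)$-tuples of positive integers with $n_{l+1}\mid n_l^k\mid n_{l-1}^k\mid\cdots\mid n_1^k$. A positive integer $n$ is an $l$-step $k$-powerful number if for every prime $p$, $\operatorname{ord}_pn\in\{0,k,2k,\dots,(l-1)k\}$ or $\operatorname{ord}_pn\ge lk$ (here $\operatorname{ord}_pn$ is the exponent of $p$ in $n$). $F_{k,l}(s):=\sum_{n}n^{-s}$, summed over all $l$-step $k$-powerful numbers $n$. $\zeta$ is the Riemann zeta function. *)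

(* Defs.v *)
From Stdlib Require Import Reals List Arith ClassicalEpsilon.
From Coquelicot Require Import Coquelicot.
Import ListNotations.
Open Scope R_scope.

(* n^{-s} = exp(-s ln n) for a positive integer n and complex s. *)
Definition cpow_neg (n : nat) (s : C) : C :=
  (Rpower (INR n) (- Re s) * cos (Im s * ln (INR n)),
   - (Rpower (INR n) (- Re s) * sin (Im s * ln (INR n)))).

Definition lsum {T : Type} (f : T -> C) (F : list T) : C :=
  fold_right Cplus (RtoC 0) (map f F).

(* Unconditional (unordered) summation of f over the set S:
   the net of finite partial sums over finite subsets of S converges to L. *)
Definition has_sum {T : Type} (f : T -> C) (S : T -> Prop) (L : C) : Prop :=
  forall eps : R, 0 < eps ->
    exists F0 : list T, (forall x, In x F0 -> S x) /\
      forall F : list T, NoDup F -> (forall x, In x F -> S x) ->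
        (forall x, In x F0 -> In x F) ->
        Cmod (Cminus (lsum f F) L) < eps.

(* The value of the sum (a chosen limit; meaningful when it exists). *)
Definition tsum {T : Type} (f : T -> C) (S : T -> Prop) : C :=
  epsilon (inhabits (RtoC 0)) (fun L => has_sum f S L).

Definition pos_int (n : nat) : Prop := (0 < n)%nat.

(* Riemann zeta function, for Re w > 1: sum_{n >= 1} n^{-w} *)
Definition zeta (w : C) : C := tsum (fun n => cpow_neg n w) pos_int.

Definition nat_prime (p : nat) : Prop :=
  (2 <= p)%nat /\ forall d, Nat.divide d p -> d = 1%nat \/ d = p.

Definition ord_is (p n e : nat) : Prop :=
  Nat.divide (p ^ e) n /\ ~ Nat.divide (p ^ (S e)) n.

Definition step_powerful (k l n : nat) : Prop :=
  (0 < n)%nat /\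
  forall p e, nat_prime p -> ord_is p n e ->
    (exists j, (j < l)%nat /\ e = (j * k)%nat) \/ (l * k <= e)%nat.

Definition F_kl (k l : nat) (s : C) : C :=
  tsum (fun n => cpow_neg n s) (step_powerful k l).

(* (l+1)-tuples (n_1,...,n_{l+1}) = [t_0; ...; t_l] of positive integers with
   n_{l+1} | n_l^k | n_{l-1}^k | ... | n_1^k *)
Definition tuple_set (k l : nat) (t : list nat) : Prop :=
  length t = S l /\
  (forall i, (i < S l)%nat -> (0 < nth i t 0)%nat) /\
  Nat.divide (nth l t 0%nat) (nth (l - 1) t 0%nat ^ k) /\
  (forall i, (S i < l)%nat -> Nat.divide (nth (S i) t 0%nat ^ k) (nth i t 0%nat ^ k)).

Definition tuple_term (k l : nat) (s : C) (t : list nat) : C :=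
  cpow_neg (fold_right Nat.mul 1%nat (map (fun n => n ^ k) (firstn l t)) * nth l t 0%nat)%nat s.

Definition zeta_prod (k l : nat) (s : C) : C :=
  fold_right Cmult (RtoC 1) (map (fun j => zeta (Cmult (RtoC (INR (j * k))) s)) (seq 2 l)).

(* Main.v *)
Require Import Defs.
From Stdlib Require Import Reals List Arith Lia Lra Permutation Classical ClassicalEpsilon.
From Coquelicot Require Import Coquelicot.
From mathcomp Require ssreflect ssrfun ssrbool eqtype ssrnat div prime bigop.
Import ListNotations.
Open Scope R_scope.

Definition rsum {T : Type} (h : T -> R) (F : list T) : R :=
  fold_right Rplus 0 (map h F).

Lemma lsum_nil {T} (f : T -> C) : lsum f [] = RtoC 0.
Proof. reflexivity. Qed.
Lemma lsum_cons {T} (f : T -> C) x F : lsum f (x :: F) = Cplus (f x) (lsum f F).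
Proof. reflexivity. Qed.
Lemma rsum_cons {T} (f : T -> R) x F : rsum f (x :: F) = f x + rsum f F.
Proof. reflexivity. Qed.

Lemma lsum_app {T} (f : T -> C) F G : lsum f (F ++ G) = Cplus (lsum f F) (lsum f G).
Proof.
  induction F as [|x F IH]; simpl.
  - unfold lsum; simpl. rewrite Cplus_0_l. reflexivity.
  - rewrite lsum_cons, lsum_cons, IH. rewrite Cplus_assoc. reflexivity.
Qed.
Lemma rsum_app {T} (f : T -> R) F G : rsum f (F ++ G) = rsum f F + rsum f G.
Proof.
  induction F as [|x F IH]; simpl. unfold rsum; simpl; ring.
  rewrite rsum_cons, rsum_cons, IH. ring.
Qed.

Lemma lsum_perm {T} (f : T -> C) F G : Permutation F G -> lsum f F = lsum f G.
Proof.
  intro H; induction H.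
  - reflexivity.
  - rewrite !lsum_cons, IHPermutation; reflexivity.
  - rewrite !lsum_cons, !Cplus_assoc, (Cplus_comm (f y)); reflexivity.
  - congruence.
Qed.
Lemma rsum_perm {T} (f : T -> R) F G : Permutation F G -> rsum f F = rsum f G.
Proof.
  intro H; induction H.
  - reflexivity.
  - rewrite !rsum_cons, IHPermutation; reflexivity.
  - rewrite !rsum_cons; ring.
  - congruence.
Qed.

Lemma lsum_map {T U} (f : U -> C) (g : T -> U) F : lsum f (map g F) = lsum (fun x => f (g x)) F.
Proof. unfold lsum. rewrite map_map. reflexivity. Qed.
Lemma rsum_map {T U} (f : U -> R) (g : T -> U) F : rsum f (map g F) = rsum (fun x => f (g x)) F.
Proof. unfold rsum. rewrite map_map. reflexivity. Qed.

Lemma lsum_ext_in {T} (f g : T -> C) F : (forall x, In x F -> f x = g x) -> lsum f F = lsum g F.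
Proof. intro H. unfold lsum. rewrite (map_ext_in f g F H). reflexivity. Qed.
Lemma rsum_ext_in {T} (f g : T -> R) F : (forall x, In x F -> f x = g x) -> rsum f F = rsum g F.
Proof. intro H. unfold rsum. rewrite (map_ext_in f g F H). reflexivity. Qed.

Lemma Cmod_lsum {T} (f : T -> C) F : Cmod (lsum f F) <= rsum (fun x => Cmod (f x)) F.
Proof.
  induction F as [|x F IH].
  - unfold lsum, rsum; simpl. rewrite Cmod_0. lra.
  - rewrite lsum_cons, rsum_cons. eapply Rle_trans. apply Cmod_triangle. lra.
Qed.

Lemma lsum_RtoC {T} (h : T -> R) F : lsum (fun x => RtoC (h x)) F = RtoC (rsum h F).
Proof.
  induction F as [|x F IH]. reflexivity.
  rewrite lsum_cons, rsum_cons, IH. rewrite <- RtoC_plus. reflexivity.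
Qed.

Lemma rsum_nonneg {T} (h : T -> R) F : (forall x, In x F -> 0 <= h x) -> 0 <= rsum h F.
Proof.
  induction F as [|x F IH]; intro H. unfold rsum; simpl; lra.
  rewrite rsum_cons. assert (0 <= h x) by (apply H; left; auto).
  assert (0 <= rsum h F) by (apply IH; intros; apply H; right; auto). lra.
Qed.

Lemma lsum_filter {T} (f : T -> C) (P : T -> bool) F :
  lsum f F = Cplus (lsum f (filter P F)) (lsum f (filter (fun x => negb (P x)) F)).
Proof.
  induction F as [|x F IH]. unfold lsum; simpl. rewrite Cplus_0_l; reflexivity.
  simpl. destruct (P x); simpl; rewrite !lsum_cons, IH.
  - rewrite Cplus_assoc; reflexivity.
  - rewrite !Cplus_assoc, (Cplus_comm (f x)); reflexivity.
Qed.
Lemma rsum_filter {T} (f : T -> R) (P : T -> bool) F :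
  rsum f F = rsum f (filter P F) + rsum f (filter (fun x => negb (P x)) F).
Proof.
  induction F as [|x F IH]. unfold rsum; simpl; ring.
  simpl. destruct (P x); simpl; rewrite !rsum_cons, IH; ring.
Qed.

Definition inb {T} (dec : forall x y : T, {x = y} + {x <> y}) (W : list T) (x : T) : bool :=
  if in_dec dec x W then true else false.

Lemma inb_true {T} (dec : forall x y : T, {x = y} + {x <> y}) (W : list T) x : inb dec W x = true <-> In x W.
Proof. unfold inb. destruct (in_dec dec x W); split; intros; auto; discriminate. Qed.
Lemma inb_false {T} (dec : forall x y : T, {x = y} + {x <> y}) (W : list T) x : inb dec W x = false <-> ~ In x W.
Proof. unfold inb. destruct (in_dec dec x W); split; intros; auto; try discriminate; contradiction. Qed.

Lemma perm_incl {T} (dec : forall x y : T, {x = y} + {x <> y}) (F G : list T) : NoDup F -> NoDup G -> incl F G ->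
  Permutation (filter (inb dec F) G) F.
Proof.
  intros HF HG HI. apply NoDup_Permutation; auto. apply NoDup_filter; auto.
  intro x. rewrite filter_In, inb_true. split; [tauto|]. intro; split; auto.
Qed.

Lemma lsum_incl {T} (dec : forall x y : T, {x = y} + {x <> y}) (f : T -> C) (F G : list T) : NoDup F -> NoDup G -> incl F G ->
  lsum f G = Cplus (lsum f F) (lsum f (filter (fun x => negb (inb dec F x)) G)).
Proof.
  intros. rewrite (lsum_filter f (inb dec F) G). rewrite (lsum_perm f _ _ (perm_incl dec F G H H0 H1)). reflexivity.
Qed.
Lemma rsum_incl {T} (dec : forall x y : T, {x = y} + {x <> y}) (f : T -> R) (F G : list T) : NoDup F -> NoDup G -> incl F G ->
  rsum f G = rsum f F + rsum f (filter (fun x => negb (inb dec F x)) G).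
Proof.
  intros. rewrite (rsum_filter f (inb dec F) G). rewrite (rsum_perm f _ _ (perm_incl dec F G H H0 H1)). reflexivity.
Qed.

Lemma rsum_le_incl {T} (dec : forall x y : T, {x = y} + {x <> y}) (h : T -> R) (F G : list T) : NoDup F -> NoDup G -> incl F G ->
  (forall x, In x G -> 0 <= h x) -> rsum h F <= rsum h G.
Proof.
  intros. rewrite (rsum_incl dec h F G) by auto.
  assert (0 <= rsum h (filter (fun x => negb (inb dec F x)) G)).
  { apply rsum_nonneg. intros x Hx. apply filter_In in Hx. apply H2; tauto. }
  lra.
Qed.

Lemma rsum_le {T} (h g : T -> R) F : (forall x, In x F -> h x <= g x) -> rsum h F <= rsum g F.
Proof.
  induction F as [|x F IH]; intro H. unfold rsum; simpl; lra.
  rewrite !rsum_cons. assert (h x <= g x) by (apply H; left; auto).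
  assert (rsum h F <= rsum g F) by (apply IH; intros; apply H; right; auto). lra.
Qed.

Lemma lsum_scal {T} (f : T -> C) c F : lsum (fun x => Cmult c (f x)) F = Cmult c (lsum f F).
Proof.
  induction F as [|x F IH]. unfold lsum; simpl. rewrite Cmult_0_r. reflexivity.
  rewrite !lsum_cons, IH. rewrite Cmult_plus_distr_l. reflexivity.
Qed.
Lemma rsum_scal {T} (f : T -> R) c F : rsum (fun x => c * f x) F = c * rsum f F.
Proof.
  induction F as [|x F IH]. unfold rsum; simpl; ring.
  rewrite !rsum_cons, IH. ring.
Qed.

Lemma lsum_prod {T U} (f : T -> C) (g : U -> C) F G :
  lsum (fun p => Cmult (f (fst p)) (g (snd p))) (list_prod F G) = Cmult (lsum f F) (lsum g G).
Proof.
  induction F as [|x F IH]. unfold lsum; simpl. rewrite Cmult_0_l. reflexivity.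
  simpl. rewrite lsum_app, IH, lsum_map. simpl. rewrite lsum_scal, lsum_cons.
  rewrite Cmult_plus_distr_r. reflexivity.
Qed.
Lemma rsum_prod {T U} (f : T -> R) (g : U -> R) F G :
  rsum (fun p => f (fst p) * g (snd p)) (list_prod F G) = rsum f F * rsum g G.
Proof.
  induction F as [|x F IH]. unfold rsum; simpl; ring.
  simpl. rewrite rsum_app, IH, rsum_map. simpl. rewrite rsum_scal, rsum_cons. ring.
Qed.

Lemma NoDup_list_prod {T U} (F : list T) (G : list U) : NoDup F -> NoDup G -> NoDup (list_prod F G).
Proof.
  intros HF HG. induction HF as [|x F Hx HF IH]; simpl. constructor.
  apply NoDup_app; auto.
  - apply NoDup_map_NoDup_ForallPairs; auto. intros a b _ _ E. inversion E; auto.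
  - intros [a b] H1 H2. apply in_map_iff in H1. destruct H1 as [y [E _]]. inversion E; subst.
    apply in_prod_iff in H2. tauto.
Qed.

Lemma has_sum_ext {T} (f g : T -> C) S L : (forall x, S x -> f x = g x) -> has_sum f S L -> has_sum g S L.
Proof.
  intros E H eps Heps. destruct (H eps Heps) as [F0 [H1 H2]]. exists F0; split; auto.
  intros F HF HS HI. rewrite <- (lsum_ext_in f g F). apply H2; auto. intros; apply E; auto.
Qed.

Lemma has_sum_reindex {T U} (f : T -> C) (g : U -> C) (S : T -> Prop) (S' : U -> Prop)
  (phi : T -> U) (psi : U -> T) L :
  (forall x, S x -> S' (phi x)) -> (forall y, S' y -> S (psi y)) ->
  (forall x, S x -> psi (phi x) = x) -> (forall y, S' y -> phi (psi y) = y) ->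
  (forall x, S x -> f x = g (phi x)) -> has_sum g S' L -> has_sum f S L.
Proof.
  intros H1 H2 H3 H4 E H eps Heps. destruct (H eps Heps) as [F0 [HF0 HF0']].
  exists (map psi F0). split.
  - intros x Hx. apply in_map_iff in Hx. destruct Hx as [y [<- Hy]]. auto.
  - intros F HF HS HI.
    replace (lsum f F) with (lsum g (map phi F)).
    + apply HF0'.
      * apply NoDup_map_NoDup_ForallPairs; auto. intros a b Ha Hb Eab.
        rewrite <- (H3 a), <- (H3 b) by auto. congruence.
      * intros y Hy. apply in_map_iff in Hy. destruct Hy as [x [<- Hx]]. auto.
      * intros y Hy. apply in_map_iff. exists (psi y). split. apply H4; auto.
        apply HI. apply in_map; auto.
    + rewrite lsum_map. apply lsum_ext_in. intros; symmetry; auto.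
Qed.

Lemma tsum_spec {T} (f : T -> C) S : (exists L, has_sum f S L) -> has_sum f S (tsum f S).
Proof.
  intro H. unfold tsum. apply (epsilon_spec (inhabits (RtoC 0)) (fun L => has_sum f S L)). exact H.
Qed.

Lemma Cmod_RtoC_nonneg r : 0 <= r -> Cmod (RtoC r) = r.
Proof. intro H. rewrite Cmod_R. apply Rabs_pos_eq; auto. Qed.

Definition absf {T} (f : T -> C) : T -> C := fun x => RtoC (Cmod (f x)).

Lemma has_sum_tail {T} (dec : forall x y : T, {x = y} + {x <> y}) (f : T -> C) S a' :
  has_sum (absf f) S a' -> forall eps, 0 < eps ->
  exists W, (forall x, In x W -> S x) /\ NoDup W /\
   forall G, NoDup G -> (forall x, In x G -> S x) -> (forall x, In x G -> ~ In x W) ->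
     rsum (fun x => Cmod (f x)) G < eps.
Proof.
  intros H eps Heps. destruct (H (eps/2)) as [W0 [HW0 HW0']]. lra.
  exists (nodup dec W0). split; [|split].
  - intros x Hx. apply nodup_In in Hx. auto.
  - apply NoDup_nodup.
  - intros G HG HS HD.
    assert (A1 := HW0' (nodup dec W0) (NoDup_nodup dec W0)).
    assert (A2 := HW0' (nodup dec W0 ++ G)).
    rewrite lsum_app in A2.
    assert (E: lsum (absf f) G = RtoC (rsum (fun x => Cmod (f x)) G)) by apply lsum_RtoC.
    rewrite E in A2.
    assert (Hx1: Cmod (Cminus (lsum (absf f) (nodup dec W0)) a') < eps/2).
    { apply A1. intros x Hx; apply nodup_In in Hx; auto. intros x Hx; apply nodup_In; auto. }
    assert (Hx2: Cmod (Cminus (Cplus (lsum (absf f) (nodup dec W0)) (RtoC (rsum (fun x => Cmod (f x)) G))) a') < eps/2).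
    { apply A2.
      - apply NoDup_app; auto. apply NoDup_nodup. intros a Ha Hb. apply (HD a Hb); auto.
      - intros x Hx. apply in_app_or in Hx. destruct Hx; auto. apply nodup_In in H0; auto.
      - intros x Hx. apply in_or_app. left. apply nodup_In; auto. }
    set (u := lsum (absf f) (nodup dec W0)) in *.
    set (r := rsum (fun x => Cmod (f x)) G) in *.
    assert (Hr: 0 <= r) by (apply rsum_nonneg; intros; apply Cmod_ge_0).
    assert (Cmod (RtoC r) <= Cmod (Cminus (Cplus u (RtoC r)) a') + Cmod (Cminus u a')).
    { replace (RtoC r) with (Cminus (Cminus (Cplus u (RtoC r)) a') (Cminus u a')) at 1.
      - eapply Rle_trans. apply Cmod_triangle. rewrite Cmod_opp. lra.
      - unfold Cminus. ring. }
    rewrite Cmod_RtoC_nonneg in H0; auto. lra.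
Qed.

Lemma has_sum_bound {T} (dec : forall x y : T, {x = y} + {x <> y}) (f : T -> C) S a' :
  has_sum (absf f) S a' -> exists M, 0 <= M /\
   forall G, NoDup G -> (forall x, In x G -> S x) -> rsum (fun x => Cmod (f x)) G <= M.
Proof.
  intro H. destruct (has_sum_tail dec f S a' H 1) as [W [HW1 [HW2 HW3]]]. lra.
  exists (rsum (fun x => Cmod (f x)) W + 1). split.
  { assert (0 <= rsum (fun x => Cmod (f x)) W) by (apply rsum_nonneg; intros; apply Cmod_ge_0). lra. }
  intros G HG HS.
  rewrite (rsum_filter _ (inb dec W) G).
  assert (rsum (fun x => Cmod (f x)) (filter (inb dec W) G) <= rsum (fun x => Cmod (f x)) W).
  { apply (rsum_le_incl dec); auto. apply NoDup_filter; auto.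
    intros x Hx. apply filter_In in Hx. apply (inb_true dec); tauto. intros; apply Cmod_ge_0. }
  assert (rsum (fun x => Cmod (f x)) (filter (fun x => negb (inb dec W x)) G) < 1).
  { apply HW3. apply NoDup_filter; auto. intros x Hx; apply filter_In in Hx; apply HS; tauto.
    intros x Hx. apply filter_In in Hx. destruct Hx as [_ Hx]. apply Bool.negb_true_iff in Hx.
    apply inb_false in Hx; auto. }
  lra.
Qed.

Lemma rsum_sub_prod {T U} (decT : forall x y : T, {x = y} + {x <> y}) (decU : forall x y : U, {x = y} + {x <> y})
  (f : T -> R) (g : U -> R) (D : list (T * U)) :
  NoDup D -> (forall x, 0 <= f x) -> (forall y, 0 <= g y) ->
  rsum (fun p => f (fst p) * g (snd p)) D <=
  rsum f (nodup decT (map fst D)) * rsum g (nodup decU (map snd D)).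
Proof.
  intros HD Hf Hg. rewrite <- rsum_prod.
  assert (decP : forall x y : T * U, {x = y} + {x <> y}) by (intros [] []; decide equality).
  apply (rsum_le_incl decP); auto.
  - apply NoDup_list_prod; apply NoDup_nodup.
  - intros [x y] H. apply in_prod; apply nodup_In; apply in_map_iff; exists (x, y); auto.
  - intros; apply Rmult_le_pos; auto.
Qed.

Lemma has_sum_prod {T U} (decT : forall x y : T, {x = y} + {x <> y}) (decU : forall x y : U, {x = y} + {x <> y})
  (f : T -> C) (g : U -> C) A B a b a' b' :
  has_sum f A a -> has_sum g B b -> has_sum (absf f) A a' -> has_sum (absf g) B b' ->
  has_sum (fun p => Cmult (f (fst p)) (g (snd p))) (fun p => A (fst p) /\ B (snd p)) (Cmult a b).
Proof.
  intros Hf Hg Hfa Hga eps Heps.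
  assert (decP : forall x y : T * U, {x = y} + {x <> y}) by (intros [] []; decide equality).
  destruct (has_sum_bound decT f A a' Hfa) as [MA [HMA HMA']].
  destruct (has_sum_bound decU g B b' Hga) as [MB [HMB HMB']].
  set (K := 2 * MB + Cmod a + MA + 1).
  assert (HK : 0 < K) by (unfold K; assert (0 <= Cmod a) by apply Cmod_ge_0; lra).
  set (d := eps / K).
  assert (Hd : 0 < d) by (unfold d; apply Rdiv_lt_0_compat; auto).
  destruct (Hf d Hd) as [W1 [HW1 HW1']].
  destruct (has_sum_tail decT f A a' Hfa d Hd) as [W2 [HW2 [_ HW2']]].
  destruct (Hg d Hd) as [V1 [HV1 HV1']].
  destruct (has_sum_tail decU g B b' Hga d Hd) as [V2 [HV2 [_ HV2']]].
  set (FA := nodup decT (W1 ++ W2)). set (FB := nodup decU (V1 ++ V2)).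
  assert (HFA : forall x, In x FA <-> In x W1 \/ In x W2).
  { intro x. unfold FA. rewrite nodup_In. split; [apply in_app_or|apply in_or_app]. }
  assert (HFB : forall x, In x FB <-> In x V1 \/ In x V2).
  { intro x. unfold FB. rewrite nodup_In. split; [apply in_app_or|apply in_or_app]. }
  assert (FAS : forall x, In x FA -> A x) by (intros x Hx; apply HFA in Hx; destruct Hx; auto).
  assert (FBS : forall x, In x FB -> B x) by (intros x Hx; apply HFB in Hx; destruct Hx; auto).
  assert (NFA : NoDup FA) by apply NoDup_nodup.
  assert (NFB : NoDup FB) by apply NoDup_nodup.
  exists (list_prod FA FB). split.
  { intros [x y] H. apply in_prod_iff in H. simpl; split; [apply FAS|apply FBS]; tauto. }
  intros F HF HS HI.
  set (h := fun p : T * U => Cmult (f (fst p)) (g (snd p))).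
  assert (N0 : NoDup (list_prod FA FB)) by (apply NoDup_list_prod; auto).
  rewrite (lsum_incl decP h (list_prod FA FB) F N0 HF HI).
  set (D := filter (fun x => negb (inb decP (list_prod FA FB) x)) F).
  unfold h at 1. rewrite lsum_prod.
  set (sA := lsum f FA). set (sB := lsum g FB).
  assert (EA : Cmod (Cminus sA a) < d).
  { apply HW1'; auto. intros x Hx; apply HFA; auto. }
  assert (EB : Cmod (Cminus sB b) < d).
  { apply HV1'; auto. intros x Hx; apply HFB; auto. }
  assert (BB : Cmod sB <= MB).
  { eapply Rle_trans. apply Cmod_lsum. apply HMB'; auto. }
  assert (HDin : forall p, In p D -> In p F /\ ~ In p (list_prod FA FB)).
  { intros p Hp. unfold D in Hp. apply filter_In in Hp. destruct Hp as [Hp1 Hp2].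
    apply Bool.negb_true_iff in Hp2. apply (inb_false decP) in Hp2. auto. }
  assert (ND : NoDup D) by (apply NoDup_filter; auto).
  set (hr := fun p : T * U => Cmod (f (fst p)) * Cmod (g (snd p))).
  assert (ED : Cmod (lsum h D) <= rsum hr D).
  { eapply Rle_trans. apply Cmod_lsum. right. apply rsum_ext_in. intros. unfold h, hr. apply Cmod_mult. }
  set (D1 := filter (fun p => negb (inb decT FA (fst p))) D).
  set (D2 := filter (fun p => negb (negb (inb decT FA (fst p)))) D).
  assert (E12 : rsum hr D = rsum hr D1 + rsum hr D2) by apply rsum_filter.
  assert (ED1 : rsum hr D1 <= d * MB).
  { eapply Rle_trans. apply (rsum_sub_prod decT decU (fun x => Cmod (f x)) (fun y => Cmod (g y))).
    apply NoDup_filter; auto. intros; apply Cmod_ge_0. intros; apply Cmod_ge_0.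
    apply Rmult_le_compat. apply rsum_nonneg; intros; apply Cmod_ge_0. apply rsum_nonneg; intros; apply Cmod_ge_0.
    - left. apply HW2'. apply NoDup_nodup.
      + intros x Hx. apply nodup_In, in_map_iff in Hx. destruct Hx as [p [<- Hp]].
        unfold D1 in Hp. apply filter_In in Hp. destruct Hp as [Hp _]. apply HDin in Hp.
        destruct (HS p (proj1 Hp)); auto.
      + intros x Hx Hw. apply nodup_In, in_map_iff in Hx. destruct Hx as [p [<- Hp]].
        unfold D1 in Hp. apply filter_In in Hp. destruct Hp as [_ Hp].
        apply Bool.negb_true_iff, (inb_false decT) in Hp. apply Hp, HFA; auto.
    - apply HMB'. apply NoDup_nodup.
      intros y Hy. apply nodup_In, in_map_iff in Hy. destruct Hy as [p [<- Hp]].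
      unfold D1 in Hp. apply filter_In in Hp. destruct Hp as [Hp _]. apply HDin in Hp.
      destruct (HS p (proj1 Hp)); auto. }
  assert (ED2 : rsum hr D2 <= MA * d).
  { eapply Rle_trans. apply (rsum_sub_prod decT decU (fun x => Cmod (f x)) (fun y => Cmod (g y))).
    apply NoDup_filter; auto. intros; apply Cmod_ge_0. intros; apply Cmod_ge_0.
    apply Rmult_le_compat. apply rsum_nonneg; intros; apply Cmod_ge_0. apply rsum_nonneg; intros; apply Cmod_ge_0.
    - apply HMA'. apply NoDup_nodup.
      intros x Hx. apply nodup_In, in_map_iff in Hx. destruct Hx as [p [<- Hp]].
      unfold D2 in Hp. apply filter_In in Hp. destruct Hp as [Hp _]. apply HDin in Hp.
      destruct (HS p (proj1 Hp)); auto.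
    - left. apply HV2'. apply NoDup_nodup.
      + intros y Hy. apply nodup_In, in_map_iff in Hy. destruct Hy as [p [<- Hp]].
        unfold D2 in Hp. apply filter_In in Hp. destruct Hp as [Hp _]. apply HDin in Hp.
        destruct (HS p (proj1 Hp)); auto.
      + intros y Hy Hv. apply nodup_In, in_map_iff in Hy. destruct Hy as [[x y'] [Ey Hp]]. simpl in Ey; subst y'.
        unfold D2 in Hp. apply filter_In in Hp. destruct Hp as [Hp Hp2].
        rewrite Bool.negb_involutive in Hp2. apply (inb_true decT) in Hp2.
        apply HDin in Hp. destruct Hp as [_ Hp]. apply Hp. apply in_prod; auto. apply HFB; auto. }
  assert (Cmod (Cminus (Cmult sA sB) (Cmult a b)) <= d * MB + Cmod a * d).
  { replace (Cminus (Cmult sA sB) (Cmult a b)) with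
      (Cplus (Cmult (Cminus sA a) sB) (Cmult a (Cminus sB b))) by (unfold Cminus; ring).
    eapply Rle_trans. apply Cmod_triangle. rewrite !Cmod_mult.
    apply Rplus_le_compat. apply Rmult_le_compat; try apply Cmod_ge_0; lra.
    apply Rmult_le_compat_l. apply Cmod_ge_0. lra. }
  replace (Cminus (Cplus (Cmult sA sB) (lsum h D)) (Cmult a b)) with
    (Cplus (Cminus (Cmult sA sB) (Cmult a b)) (lsum h D)) by (unfold Cminus; ring).
  eapply Rle_lt_trans. apply Cmod_triangle.
  assert (eps = d * K) by (unfold d; field; lra).
  assert (0 <= Cmod a) by apply Cmod_ge_0.
  assert (d * MB + Cmod a * d + (d * MB + MA * d) < d * K).
  { unfold K. nra. }
  lra.
Qed.

Lemma has_sum_prod_abs {T U} (decT : forall x y : T, {x = y} + {x <> y}) (decU : forall x y : U, {x = y} + {x <> y})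
  (f : T -> C) (g : U -> C) A B a' b' :
  has_sum (absf f) A a' -> has_sum (absf g) B b' ->
  has_sum (absf (fun p => Cmult (f (fst p)) (g (snd p)))) (fun p => A (fst p) /\ B (snd p)) (Cmult a' b').
Proof.
  intros Hfa Hga.
  assert (Hfa' : has_sum (absf (absf f)) A a').
  { eapply has_sum_ext; [|exact Hfa]. intros. unfold absf. rewrite Cmod_RtoC_nonneg; auto. apply Cmod_ge_0. }
  assert (Hga' : has_sum (absf (absf g)) B b').
  { eapply has_sum_ext; [|exact Hga]. intros. unfold absf. rewrite Cmod_RtoC_nonneg; auto. apply Cmod_ge_0. }
  eapply has_sum_ext; [|apply (has_sum_prod decT decU _ _ A B a' b' a' b' Hfa Hga Hfa' Hga')].
  intros. unfold absf. rewrite Cmod_mult, RtoC_mult. reflexivity.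
Qed.

Lemma Cmod_le_2max (z : C) : Cmod z <= 2 * Rmax (Rabs (fst z)) (Rabs (snd z)).
Proof.
  eapply Rle_trans. apply Cmod_2Rmax. apply Rmult_le_compat_r.
  - eapply Rle_trans. apply Rabs_pos. apply Rmax_l.
  - assert (H := sqrt_sqrt 2). assert (H2 := sqrt_pos 2). nra.
Qed.

Lemma Im_le_Cmod (c : C) : Rabs (Im c) <= Cmod c.
Proof. eapply Rle_trans; [|apply Rmax_Cmod]. apply Rmax_r. Qed.

Definition sbool (S : nat -> Prop) (x : nat) : bool :=
  if excluded_middle_informative (S x) then true else false.
Lemma sbool_true S x : sbool S x = true <-> S x.
Proof. unfold sbool. destruct (excluded_middle_informative (S x)); split; intros; auto; try discriminate; contradiction. Qed.

Definition Pn (S : nat -> Prop) (a N : nat) := filter (sbool S) (seq a N).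

Lemma Pn_split S N m : Pn S 0 (N + m) = Pn S 0 N ++ Pn S N m.
Proof. unfold Pn. rewrite seq_app, filter_app. reflexivity. Qed.

Lemma Pn_NoDup S a N : NoDup (Pn S a N).
Proof. apply NoDup_filter, seq_NoDup. Qed.
Lemma Pn_In S a N x : In x (Pn S a N) <-> (a <= x < a + N)%nat /\ S x.
Proof. unfold Pn. rewrite filter_In, in_seq, sbool_true. tauto. Qed.

Lemma maxl_spec (F : list nat) x : In x F -> (x <= fold_right max 0 F)%nat.
Proof. induction F; simpl; intros H; [contradiction|]. destruct H; subst; [lia|]. specialize (IHF H); lia. Qed.

Lemma has_sum_exists_nat (f : nat -> C) (Q : nat -> Prop) M :
  (forall G, NoDup G -> (forall x, In x G -> Q x) -> rsum (fun x => Cmod (f x)) G <= M) ->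
  exists L, has_sum f Q L.
Proof.
  intro HM.
  set (A := fun N => rsum (fun x => Cmod (f x)) (Pn Q 0 N)).
  set (a := fun N => lsum f (Pn Q 0 N)).
  assert (Adiff : forall N m, A (N + m)%nat = A N + rsum (fun x => Cmod (f x)) (Pn Q N m)).
  { intros. unfold A. rewrite Pn_split, rsum_app. reflexivity. }
  assert (adiff : forall N m, a (N + m)%nat = Cplus (a N) (lsum f (Pn Q N m))).
  { intros. unfold a. rewrite Pn_split, lsum_app. reflexivity. }
  assert (Agrow : Un_growing A).
  { intro n. replace (Datatypes.S n) with (n + 1)%nat by lia. rewrite Adiff.
    assert (0 <= rsum (fun x => Cmod (f x)) (Pn Q n 1)) by (apply rsum_nonneg; intros; apply Cmod_ge_0). lra. }
  assert (Aub : has_ub A).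
  { exists M. intros r [i ->]. apply HM. apply Pn_NoDup. intros x Hx; apply Pn_In in Hx; tauto. }
  destruct (growing_cv A Agrow Aub) as [Ainf HAinf].
  assert (Amono : forall n m, (n <= m)%nat -> A n <= A m).
  { intros n m Hnm. replace m with (n + (m - n))%nat by lia. rewrite Adiff.
    assert (0 <= rsum (fun x => Cmod (f x)) (Pn Q n (m - n))) by (apply rsum_nonneg; intros; apply Cmod_ge_0). lra. }
  assert (Ale : forall n, A n <= Ainf).
  { intro n. apply Rnot_lt_le. intro Hlt. destruct (HAinf (A n - Ainf)) as [N HN]. lra.
    specialize (HN (max n N) ltac:(lia)). unfold Rdist in HN. assert (A n <= A (max n N)) by (apply Amono; lia).
    rewrite Rabs_pos_eq in HN by lra. lra. }
  assert (Atail : forall eps, 0 < eps -> exists N, forall n, (n >= N)%nat -> Ainf - A n < eps).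
  { intros eps Heps. destruct (HAinf eps Heps) as [N HN]. exists N. intros n Hn. specialize (HN n Hn).
    unfold Rdist in HN. rewrite Rabs_minus_sym in HN. rewrite Rabs_pos_eq in HN. auto. specialize (Ale n); lra. }
  assert (acauchy : forall n m, (n <= m)%nat -> Cmod (Cminus (a m) (a n)) <= Ainf - A n).
  { intros n m Hnm. replace m with (n + (m - n))%nat by lia. rewrite adiff.
    replace (Cminus (Cplus (a n) (lsum f (Pn Q n (m - n)))) (a n)) with (lsum f (Pn Q n (m - n))) by (unfold Cminus; ring).
    eapply Rle_trans. apply Cmod_lsum. specialize (Ale (n + (m - n))%nat). rewrite Adiff in Ale. lra. }
  assert (acauchy2 : forall n m N, (n >= N)%nat -> (m >= N)%nat -> Cmod (Cminus (a m) (a n)) <= 2 * (Ainf - A N)).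
  { intros n m N Hn Hm.
    replace (Cminus (a m) (a n)) with (Cminus (Cminus (a m) (a N)) (Cminus (a n) (a N))) by (unfold Cminus; ring).
    eapply Rle_trans. unfold Cminus at 1. eapply Rle_trans. apply Cmod_triangle. rewrite Cmod_opp. apply Rle_refl.
    assert (H1 := acauchy N m Hm). assert (H2 := acauchy N n Hn). lra. }
  assert (CRe : Cauchy_crit (fun n => Re (a n))).
  { intros eps Heps. destruct (Atail (eps/3)) as [N HN]. lra. exists N. intros n m Hn Hm.
    unfold Rdist. assert (H := acauchy2 m n N Hm Hn). specialize (HN N (le_n N)).
    eapply Rle_lt_trans; [|instantiate (1 := 2 * (Ainf - A N)); lra].
    eapply Rle_trans; [|exact H]. replace (Re (a n) - Re (a m)) with (Re (Cminus (a n) (a m))).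
    apply re_le_Cmod. unfold Cminus, Re. simpl. ring. }
  assert (CIm : Cauchy_crit (fun n => Im (a n))).
  { intros eps Heps. destruct (Atail (eps/3)) as [N HN]. lra. exists N. intros n m Hn Hm.
    unfold Rdist. assert (H := acauchy2 m n N Hm Hn). specialize (HN N (le_n N)).
    eapply Rle_lt_trans; [|instantiate (1 := 2 * (Ainf - A N)); lra].
    eapply Rle_trans; [|exact H]. replace (Im (a n) - Im (a m)) with (Im (Cminus (a n) (a m))).
    apply Im_le_Cmod. unfold Cminus, Im. simpl. ring. }
  destruct (Rcomplete.R_complete _ CRe) as [lr Hlr].
  destruct (Rcomplete.R_complete _ CIm) as [li Hli].
  exists (lr, li). intros eps Heps.
  destruct (Atail (eps/2)) as [N1 HN1]. lra.
  destruct (Hlr (eps/8)) as [N2 HN2]. lra.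
  destruct (Hli (eps/8)) as [N3 HN3]. lra.
  set (N := max N1 (max N2 N3)).
  exists (Pn Q 0 N). split.
  { intros x Hx; apply Pn_In in Hx; tauto. }
  intros F HF HS HI.
  assert (decn : forall x y : nat, {x = y} + {x <> y}) by decide equality.
  rewrite (lsum_incl decn f (Pn Q 0 N) F (Pn_NoDup _ _ _) HF HI).
  set (D := filter (fun x => negb (inb decn (Pn Q 0 N) x)) F).
  set (M' := Datatypes.S (fold_right max N F)).
  assert (HD : rsum (fun x => Cmod (f x)) D <= rsum (fun x => Cmod (f x)) (Pn Q N (M' - N))).
  { apply (rsum_le_incl decn). apply NoDup_filter; auto. apply Pn_NoDup.
    - intros x Hx. unfold D in Hx. apply filter_In in Hx. destruct Hx as [Hx1 Hx2].
      apply Bool.negb_true_iff, (inb_false decn) in Hx2. apply Pn_In. split; [|auto].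
      assert (x < N \/ x >= N)%nat as [Hlt|Hge] by lia.
      + exfalso. apply Hx2. apply Pn_In. split; [lia|auto].
      + assert (x <= fold_right max N F)%nat.
        { clear -Hx1. induction F; simpl in *; [contradiction|]. destruct Hx1; subst; [lia|]. specialize (IHF H); lia. }
        unfold M'. lia.
    - intros; apply Cmod_ge_0. }
  assert (HM' : M' = (N + (M' - N))%nat).
  { unfold M'. assert (N <= fold_right max N F)%nat by (clear; induction F; simpl; lia). lia. }
  assert (HDb : rsum (fun x => Cmod (f x)) D < eps / 2).
  { assert (Ha := Ale M'). rewrite HM', Adiff in Ha. specialize (HN1 N ltac:(unfold N; lia)). lra. }
  assert (HaN : Cmod (Cminus (a N) (lr, li)) <= eps / 4).
  { eapply Rle_trans. apply Cmod_le_2max.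
    specialize (HN2 N ltac:(unfold N; lia)). specialize (HN3 N ltac:(unfold N; lia)). unfold Rdist in *.
    simpl. unfold Re, Im in *. apply Rmax_lub_lt in HN2 || idtac.
    assert (Rmax (Rabs (fst (a N) + - lr)) (Rabs (snd (a N) + - li)) <= eps/8).
    { apply Rmax_lub; unfold Rminus in *; lra. }
    lra. }
  fold (a N).
  replace (Cminus (Cplus (a N) (lsum f D)) (lr, li)) with (Cplus (Cminus (a N) (lr, li)) (lsum f D)) by (unfold Cminus; ring).
  eapply Rle_lt_trans. apply Cmod_triangle.
  assert (Cmod (lsum f D) <= rsum (fun x => Cmod (f x)) D) by apply Cmod_lsum.
  lra.
Qed.

Lemma INR_pos (n : nat) : (0 < n)%nat -> 0 < INR n.
Proof. intro; apply lt_0_INR; auto. Qed.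

Lemma cpow_neg_mult m n s : (0 < m)%nat -> (0 < n)%nat ->
  cpow_neg (m * n) s = Cmult (cpow_neg m s) (cpow_neg n s).
Proof.
  intros Hm Hn. unfold cpow_neg. rewrite mult_INR.
  assert (Hm' := INR_pos m Hm). assert (Hn' := INR_pos n Hn).
  rewrite <- Rpower_mult_distr by auto. rewrite ln_mult by auto.
  rewrite Rmult_plus_distr_l, cos_plus, sin_plus.
  unfold Cmult; simpl. f_equal; ring.
Qed.

Lemma cpow_neg_1 s : cpow_neg 1 s = RtoC 1.
Proof.
  unfold cpow_neg. simpl INR. rewrite ln_1, Rmult_0_r, cos_0, sin_0.
  unfold Rpower. rewrite ln_1, Rmult_0_r, exp_0. unfold RtoC. f_equal; ring.
Qed.

Lemma cpow_neg_pow d j s : (0 < d)%nat ->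
  cpow_neg d (Cmult (RtoC (INR j)) s) = cpow_neg (d ^ j) s.
Proof.
  intro Hd. assert (Hd' := INR_pos d Hd). unfold cpow_neg. rewrite pow_INR.
  rewrite ln_pow by auto. rewrite <- Rpower_pow by auto. rewrite Rpower_mult.
  unfold Cmult, Re, Im, RtoC; simpl.
  replace (- (INR j * fst s - 0 * snd s)) with (INR j * - fst s) by ring.
  replace ((INR j * snd s + 0 * fst s) * ln (INR d)) with (snd s * (INR j * ln (INR d))) by ring.
  reflexivity.
Qed.

Lemma Cmod_cpow_neg n s : (0 < n)%nat -> Cmod (cpow_neg n s) = Rpower (INR n) (- Re s).
Proof.
  intro Hn. unfold cpow_neg, Cmod. cbn [fst snd].
  set (A := Rpower (INR n) (- Re s)). set (t := Im s * ln (INR n)).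
  assert (Hsc := sin2_cos2 t). unfold Rsqr in Hsc.
  replace ((A * cos t) ^ 2 + (- (A * sin t)) ^ 2) with (A ^ 2 * (sin t * sin t + cos t * cos t)) by ring.
  rewrite Hsc, Rmult_1_r. apply sqrt_pow2. unfold A, Rpower. left; apply exp_pos.
Qed.

Lemma Rpower_pos x y : 0 < Rpower x y.
Proof. unfold Rpower; apply exp_pos. Qed.

Lemma key_ineq (sg : R) (n : nat) : 1 < sg -> (2 <= n)%nat ->
  (sg - 1) * Rpower (INR n) (- sg) <= Rpower (INR n - 1) (1 - sg) - Rpower (INR n) (1 - sg).
Proof.
  intros Hs Hn. assert (Hn2 : 2 <= INR n) by (replace 2 with (INR 2) by (simpl; ring); apply le_INR; auto).
  set (x := INR n) in *. set (t := 1 - sg).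
  set (y := (x - 1) / x).
  assert (Hy : 0 < y) by (unfold y; apply Rdiv_lt_0_compat; lra).
  assert (Ey : x - 1 = x * y) by (unfold y; field; lra).
  rewrite Ey. rewrite <- Rpower_mult_distr by lra.
  assert (Hly : ln y <= y - 1).
  { assert (H := exp_ineq1_le (ln y)). rewrite exp_ln in H by auto. lra. }
  assert (Hyt : 1 + t * (y - 1) <= Rpower y t).
  { unfold Rpower. eapply Rle_trans; [|apply exp_ineq1_le]. unfold t. nra. }
  assert (Eym : y - 1 = - / x) by (unfold y; field; lra).
  assert (Exs : Rpower x (- sg) = Rpower x t * / x).
  { unfold t. replace (- sg) with ((1 - sg) + Ropp 1) by ring. rewrite Rpower_plus.
    rewrite Rpower_Ropp, Rpower_1 by lra. reflexivity. }
  rewrite Exs. assert (Hxt := Rpower_pos x t).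
  assert (Rpower x t * (1 + t * (y - 1)) <= Rpower x t * Rpower y t) by (apply Rmult_le_compat_l; lra).
  rewrite Eym in H. unfold t in *. nra.
Qed.

Lemma pseries_seq (sg : R) N : 1 < sg ->
  rsum (fun n => Rpower (INR n) (- sg)) (seq 1 (S N)) <= 1 + (1 - Rpower (INR (S N)) (1 - sg)) / (sg - 1).
Proof.
  intro Hs. induction N.
  - unfold rsum; simpl. unfold Rpower. rewrite ln_1, !Rmult_0_r, exp_0. unfold Rdiv. rewrite Rminus_diag, Rmult_0_l. lra.
  - rewrite seq_S, rsum_app.
    assert (R1: rsum (fun n => Rpower (INR n) (-sg)) [(1 + S N)%nat] = Rpower (INR (S (S N))) (-sg)).
    { unfold rsum; cbn [map fold_right]. replace (1 + S N)%nat with (S (S N)) by lia. ring. }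
    rewrite R1.
    assert (K := key_ineq sg (S (S N)) Hs ltac:(lia)).
    replace (INR (S (S N)) - 1) with (INR (S N)) in K by (rewrite (S_INR (S N)); ring).
    assert (E : forall a b, b * (sg - 1) <= a -> b <= a / (sg - 1)).
    { intros a b Hab. apply Rmult_le_reg_r with (sg - 1). lra. unfold Rdiv. rewrite Rmult_assoc, Rinv_l by lra. lra. }
    assert (Rpower (INR (S (S N))) (- sg) <= (Rpower (INR (S N)) (1 - sg) - Rpower (INR (S (S N))) (1 - sg)) / (sg - 1)).
    { apply E. lra. }
    unfold Rdiv in *. rewrite Rmult_minus_distr_r in *. lra.
Qed.

Lemma pseries_bound (sg : R) G : 1 < sg -> NoDup G -> (forall x, In x G -> (0 < x)%nat) ->
  rsum (fun n => Rpower (INR n) (- sg)) G <= 1 + 1 / (sg - 1).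
Proof.
  intros Hs HG HP.
  assert (decn : forall x y : nat, {x = y} + {x <> y}) by decide equality.
  set (N := fold_right max 0%nat G).
  eapply Rle_trans. apply (rsum_le_incl decn _ G (seq 1 (S N))); auto. apply seq_NoDup.
  - intros x Hx. apply in_seq. specialize (HP x Hx).
    assert (x <= N)%nat. { unfold N. clear -Hx. induction G; simpl in *; [contradiction|]. destruct Hx; subst; [lia|]. specialize (IHG H); lia. }
    lia.
  - intros; left; apply Rpower_pos.
  - eapply Rle_trans. apply pseries_seq; auto.
    assert (0 < Rpower (INR (S N)) (1 - sg)) by apply Rpower_pos.
    unfold Rdiv. apply Rplus_le_compat_l. apply Rmult_le_compat_r. left; apply Rinv_0_lt_compat; lra. lra.
Qed.

Lemma summable_nat (f : nat -> C) S sg : 1 < sg -> (forall x, S x -> (0 < x)%nat) ->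
  (forall x, S x -> Cmod (f x) = Rpower (INR x) (- sg)) ->
  has_sum f S (tsum f S) /\ exists a', has_sum (absf f) S a'.
Proof.
  intros Hs HS Hf.
  assert (Hb : forall G, NoDup G -> (forall x, In x G -> S x) -> rsum (fun x => Cmod (f x)) G <= 1 + 1 / (sg - 1)).
  { intros G HG HG'. rewrite (rsum_ext_in _ (fun n => Rpower (INR n) (- sg))).
    apply pseries_bound; auto. intros; apply Hf; auto. }
  split.
  - apply tsum_spec. eapply has_sum_exists_nat. exact Hb.
  - eapply has_sum_exists_nat. intros G HG HG'. rewrite (rsum_ext_in _ (fun x => Cmod (f x))). apply Hb; auto.
    intros. unfold absf. apply Cmod_RtoC_nonneg, Cmod_ge_0.
Qed.

Lemma zeta_sum (k j : nat) s : (1 <= j)%nat -> (1 <= k)%nat -> 1 < Re s ->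
  has_sum (fun d => cpow_neg (d ^ (j * k)) s) pos_int (zeta (Cmult (RtoC (INR (j * k))) s)) /\
  exists a', has_sum (absf (fun d => cpow_neg (d ^ (j * k)) s)) pos_int a'.
Proof.
  intros Hj Hk Hs.
  set (w := Cmult (RtoC (INR (j * k))) s).
  assert (Hw : Re w = INR (j * k) * Re s) by (unfold w, Cmult, Re, RtoC; simpl; ring).
  assert (Hjk : 1 <= INR (j * k)) by (replace 1 with (INR 1) by reflexivity; apply le_INR; nia).
  assert (Hw1 : 1 < Re w) by (rewrite Hw; nra).
  destruct (summable_nat (fun n => cpow_neg n w) pos_int (Re w) Hw1) as [H1 [a' H2]].
  - auto.
  - intros x Hx. apply Cmod_cpow_neg; auto.
  - split.
    + unfold zeta. fold w. eapply has_sum_ext; [|exact H1]. intros x Hx. unfold w. apply cpow_neg_pow; auto.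
    + exists a'. eapply has_sum_ext; [|exact H2]. intros x Hx. unfold absf, w. rewrite cpow_neg_pow; auto.
Qed.

Lemma has_sum_single {T} (f : T -> C) x0 : has_sum f (fun x => x = x0) (f x0).
Proof.
  intros eps Heps. exists [x0]. split. intros x [<-|[]]; auto.
  intros F HF HS HI.
  assert (F = [x0]).
  { destruct F as [|a F']. destruct (HI x0 (or_introl eq_refl)).
    assert (a = x0) by (apply HS; left; auto). subst a.
    destruct F' as [|b F'']; auto. assert (b = x0) by (apply HS; right; left; auto). subst b.
    inversion HF; subst. exfalso. apply H1; left; auto. }
  subst F. unfold lsum; simpl. replace (Cminus (Cplus (f x0) (RtoC 0)) (f x0)) with (RtoC 0) by (unfold Cminus; ring).
  rewrite Cmod_0. auto.
Qed.

Definition Pset (js ds : list nat) : Prop := length ds = length js /\ forall d, In d ds -> (0 < d)%nat.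

Fixpoint pval (k : nat) (js ds : list nat) : nat :=
  match js, ds with
  | j :: js', d :: ds' => d ^ (j * k) * pval k js' ds'
  | _, _ => 1%nat
  end.

Lemma pval_pos k js ds : (forall d, In d ds -> (0 < d)%nat) -> (0 < pval k js ds)%nat.
Proof.
  revert ds; induction js as [|j js IH]; intros ds Hd; simpl. lia.
  destruct ds as [|d ds]. lia. apply Nat.mul_pos_pos.
  apply Nat.neq_0_lt_0, Nat.pow_nonzero. specialize (Hd d (or_introl eq_refl)). lia.
  apply IH. intros; apply Hd; right; auto.
Qed.

Lemma natdec : forall x y : nat, {x = y} + {x <> y}.
Proof. decide equality. Qed.
Lemma listdec : forall x y : list nat, {x = y} + {x <> y}.
Proof. apply list_eq_dec, natdec. Qed.

Lemma Pzeta k s js : (1 <= k)%nat -> 1 < Re s -> (forall j, In j js -> (1 <= j)%nat) ->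
  has_sum (fun ds => cpow_neg (pval k js ds) s) (Pset js)
    (fold_right Cmult (RtoC 1) (map (fun j => zeta (Cmult (RtoC (INR (j * k))) s)) js)) /\
  exists a', has_sum (absf (fun ds => cpow_neg (pval k js ds) s)) (Pset js) a'.
Proof.
  intros Hk Hs. induction js as [|j js IH]; intros Hj.
  - assert (E : forall ds, Pset [] ds <-> ds = []).
    { intros ds; unfold Pset; split. intros [H _]. destruct ds; simpl in H; auto; discriminate.
      intros ->. split; [reflexivity | intros d []]. }
    split.
    + simpl. rewrite <- cpow_neg_1 with (s := s).
      eapply has_sum_reindex with (phi := fun x => x) (psi := fun x => x) (S' := fun x => x = [])
        (g := fun ds => cpow_neg (pval k [] ds) s);
        try (intros; apply E; auto); auto. apply (has_sum_single (fun ds => cpow_neg (pval k [] ds) s) []).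
    + exists (absf (fun ds => cpow_neg (pval k [] ds) s) []).
      eapply has_sum_reindex with (phi := fun x => x) (psi := fun x => x) (S' := fun x => x = [])
        (g := absf (fun ds => cpow_neg (pval k [] ds) s));
        try (intros; apply E; auto); auto. apply (has_sum_single (absf (fun ds => cpow_neg (pval k [] ds) s)) []).
  - assert (Hj0 : (1 <= j)%nat) by (apply Hj; left; auto).
    destruct IH as [IH1 [b' IH2]]. intros; apply Hj; right; auto.
    destruct (zeta_sum k j s Hj0 Hk Hs) as [Z1 [a' Z2]].
    set (f := fun d => cpow_neg (d ^ (j * k)) s) in *.
    set (g := fun ds => cpow_neg (pval k js ds) s) in *.
    assert (Hphi1 : forall ds, Pset (j :: js) ds -> pos_int (hd 0%nat ds) /\ Pset js (tl ds)).
    { intros [|d ds] [H1 H2]; simpl in H1; try discriminate. simpl. split.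
      unfold pos_int; apply H2; left; auto. split. lia. intros; apply H2; right; auto. }
    assert (Hpsi1 : forall p : nat * list nat, pos_int (fst p) /\ Pset js (snd p) -> Pset (j :: js) (fst p :: snd p)).
    { intros [d ds] [H1 [H2 H3]]. split. simpl. f_equal; exact H2. intros x [<-|Hx]; auto. }
    assert (Hval : forall ds, Pset (j :: js) ds -> cpow_neg (pval k (j :: js) ds) s = Cmult (f (hd 0%nat ds)) (g (tl ds))).
    { intros [|d ds] [H1 H2]; simpl in H1; try discriminate. simpl. unfold f, g.
      apply cpow_neg_mult. apply Nat.neq_0_lt_0, Nat.pow_nonzero. specialize (H2 d (or_introl eq_refl)). lia.
      apply pval_pos. intros; apply H2; right; auto. }
    split.
    + simpl. eapply has_sum_reindex with (phi := fun ds => (hd 0%nat ds, tl ds)) (psi := fun p => fst p :: snd p) (S' := fun p => pos_int (fst p) /\ Pset js (snd p)) (g := fun p => Cmult (f (fst p)) (g (snd p)));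
        [exact Hphi1 | exact Hpsi1 | | | exact Hval | ].
      * intros [|d ds] [H1 _]; simpl in H1; try discriminate. reflexivity.
      * intros [d ds] _. reflexivity.
      * apply (has_sum_prod natdec listdec f g pos_int (Pset js) _ _ a' b'); auto.
    + exists (Cmult a' b').
      eapply has_sum_reindex with (phi := fun ds => (hd 0%nat ds, tl ds)) (psi := fun p => fst p :: snd p) (S' := fun p => pos_int (fst p) /\ Pset js (snd p)) (g := absf (fun p => Cmult (f (fst p)) (g (snd p))));
        [exact Hphi1 | exact Hpsi1 | | | | ].
      * intros [|d ds] [H1 _]; simpl in H1; try discriminate. reflexivity.
      * intros [d ds] _. reflexivity.
      * intros ds Hds. unfold absf at 1. rewrite Hval by auto. reflexivity.
      * apply (has_sum_prod_abs natdec listdec f g pos_int (Pset js) a' b'); auto.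
Qed.

Module NT.
Import ssreflect ssrfun ssrbool eqtype ssrnat div prime bigop.
Local Open Scope nat_scope.

Lemma pow_expn (a n : nat) : Nat.pow a n = expn a n.
Proof. elim: n => [|n IH] //=. by rewrite expnS IH. Qed.

Lemma divide_dvdn (a b : nat) : Nat.divide a b <-> dvdn a b.
Proof.
  split.
  - move=> [c ->]. by rewrite dvdn_mull.
  - move/dvdnP=> [c ->]. by exists c.
Qed.

Lemma logn_mul p a b : (0 < a)%coq_nat -> (0 < b)%coq_nat -> logn p (Nat.mul a b) = Nat.add (logn p a) (logn p b).
Proof. move=> /ltP Ha /ltP Hb. exact: lognM. Qed.

Lemma logn_pow p a n : logn p (Nat.pow a n) = Nat.mul n (logn p a).
Proof. by rewrite pow_expn lognX. Qed.

Lemma eq_from_log a b : (0 < a)%coq_nat -> (0 < b)%coq_nat ->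
  (forall p, prime p = true -> logn p a = logn p b) -> a = b.
Proof.
  move=> /ltP Ha /ltP Hb H. apply: eqn_from_log => // p.
  case Pp: (prime p). by apply: H.
  by rewrite /logn Pp.
Qed.

Lemma dvd_log a b : (0 < a)%coq_nat -> (0 < b)%coq_nat ->
  (Nat.divide a b <-> forall p, prime p = true -> (logn p a <= logn p b)%coq_nat).
Proof.
  move=> /ltP Ha /ltP Hb. rewrite divide_dvdn. split.
  - move=> H p _. apply/leP. exact: dvdn_leq_log.
  - move=> H. apply/(dvdn_partP _ Ha) => p. rewrite mem_primes => /andP[Pp _].
    rewrite p_part pfactor_dvdn //. apply/leP. exact: H.
Qed.

Lemma ord_is_log p n e : prime p = true -> (0 < n)%coq_nat -> (ord_is p n e <-> e = logn p n).
Proof.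
  move=> Pp /ltP Hn. rewrite /ord_is !divide_dvdn !pow_expn !pfactor_dvdn //.
  split.
  - move=> [H1 H2]. apply/eqP. rewrite eqn_leq H1 /=. rewrite leqNgt. apply/negP => H3. by apply: H2.
  - move=> ->. split => //. by rewrite ltnn.
Qed.

Lemma nat_prime_iff p : nat_prime p <-> prime p = true.
Proof.
  rewrite /nat_prime. split.
  - move=> [H1 H2]. apply/primeP. split. by apply/leP.
    move=> d /divide_dvdn Hd. case: (H2 d Hd) => ->; by rewrite eqxx ?orbT.
  - move/primeP=> [H1 H2]. split. by apply/leP.
    move=> d /divide_dvdn Hd. move: (H2 d Hd) => /orP [/eqP ->|/eqP ->]; auto.
Qed.

Lemma logn_big p n : (0 < n)%coq_nat -> (n < p)%coq_nat -> logn p n = 0.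
Proof.
  move=> /ltP Hn /ltP Hp. apply/eqP. rewrite -leqn0 leqNgt logn_gt0 mem_primes.
  apply/negP => /and3P [_ _ Hd]. move: (dvdn_leq Hn Hd). by rewrite leqNgt Hp.
Qed.

Definition build (E : nat -> nat) (B : nat) : nat :=
  \prod_(0 <= p < B | prime p) p ^ E p.

Lemma build_pos E B : (0 < build E B)%coq_nat.
Proof.
  apply/ltP. rewrite /build. apply: prodn_cond_gt0 => p Pp. by rewrite expn_gt0 prime_gt0.
Qed.

Lemma logn_build q E B : prime q = true -> logn q (build E B) = if Nat.ltb q B then E q else 0.
Proof.
  move=> Pq. rewrite /build. elim: B => [|B IH].
  - by rewrite big_geq // logn1.
  - rewrite big_mkcond big_nat_recr //= -big_mkcond /=.
    have Hpos : 0 < \prod_(0 <= p < B | prime p) p ^ E p.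
      apply: prodn_cond_gt0 => p Pp. by rewrite expn_gt0 prime_gt0.
    case PB: (prime B).
    + rewrite lognM // ?expn_gt0 ?prime_gt0 // IH lognX logn_prime //.
      case: (eqVneq q B) => [->|NE] /=.
      * have -> : Nat.ltb B B = false by apply Nat.ltb_irrefl.
        have -> : Nat.ltb B B.+1 = true by apply/Nat.ltb_lt; lia.
        by rewrite muln1.
      * rewrite muln0 addn0. have Hq : q <> B by apply/eqP.
        case: (Nat.ltb_spec q B) => H1; case: (Nat.ltb_spec q B.+1) => H2 //; lia.
    + rewrite muln1 IH.
      have Hq : q <> B by move=> E'; subst; rewrite Pq in PB.
      case: (Nat.ltb_spec q B) => H1; case: (Nat.ltb_spec q B.+1) => H2 //; lia.
Qed.

End NT.

Open Scope nat_scope.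

Fixpoint sumn (f : nat -> nat) (n : nat) : nat :=
  match n with 0 => 0 | S m => sumn f m + f m end.

Lemma sumn_ext f g n : (forall i, i < n -> f i = g i) -> sumn f n = sumn g n.
Proof. induction n; simpl; intros H; auto. rewrite IHn, H; auto; intros; apply H; lia. Qed.

Lemma sumn_shift f n : sumn f (S n) = f 0 + sumn (fun i => f (S i)) n.
Proof. induction n; simpl in *; lia. Qed.

Lemma sumn_scal c f n : sumn (fun i => c * f i) n = c * sumn f n.
Proof. induction n; simpl; lia. Qed.

Lemma divmod_eq k c r : r < k -> (k * c + r) / k = c /\ (k * c + r) mod k = r.
Proof.
  intro H. split.
  - symmetry. apply (Nat.div_unique _ _ _ r); lia.
  - symmetry. apply (Nat.mod_unique _ _ c); lia.
Qed.

Section Local.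
Variables k l : nat.
Hypothesis Hk : 1 <= k.
Hypothesis Hl : 1 <= l.

Definition agree (f g : nat -> nat) := forall i, i <= l -> f i = g i.

Definition LocAf (x : nat -> nat) := (forall i, i + 1 < l -> x (i + 1) <= x i) /\ x l <= k * x (l - 1).
Definition LocMf (z : nat -> nat) := z l <= k * z (l - 1).
Definition LocRf (y : nat -> nat) := (exists j, j < l /\ y 0 = j * k) \/ l * k <= y 0.

Definition wAf (x : nat -> nat) := k * sumn x l + x l.
Definition wMf (z : nat -> nat) := k * sumn (fun i => (i + 1) * z i) l + z l.
Definition wRf (y : nat -> nat) := y 0 + k * sumn (fun i => (i + 2) * y (i + 1)) l.

Definition phi1f (x : nat -> nat) (i : nat) := if i <? l - 1 then x i - x (S i) else x i.
Definition psi1f (z : nat -> nat) (i : nat) := if i <? l then sumn (fun j => z (i + j)) (l - i) else z i.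

Definition E0 (z : nat -> nat) :=
  let c0 := z 0 in let a := z (l - 1) in let b := z l in
  if b =? k * a then (if l =? 1 then 0 else k * (c0 mod l))
  else (if l =? 1 then k + k * (a - 1 - b / k) + b mod k else l * k + k * c0 + b mod k).
Definition D0 (z : nat -> nat) :=
  let c0 := z 0 in let a := z (l - 1) in let b := z l in
  if b =? k * a then c0 / l else a - 1 - b / k.
Definition D1 (z : nat -> nat) :=
  let a := z (l - 1) in let b := z l in
  if b =? k * a then a else b / k.
Definition phi2f (z : nat -> nat) (i : nat) :=
  if i =? 0 then E0 z else if i =? l then D1 z else if i =? l - 1 then D0 z else z i.

Definition Af (y : nat -> nat) :=
  let e := y 0 in let v := y (l - 1) in let w := y l in
  if e <? l * k then w else (if l =? 1 then 1 + (e - k) / k + w else 1 + v + w).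
Definition Bf (y : nat -> nat) :=
  let e := y 0 in let w := y l in
  if e <? l * k then k * w else k * w + (e - l * k) mod k.
Definition Cf (y : nat -> nat) :=
  let e := y 0 in let v := y (l - 1) in
  if e <? l * k then e / k + l * v else (e - l * k) / k.
Definition psi2f (y : nat -> nat) (i : nat) :=
  if i =? l then Bf y else if i =? l - 1 then Af y else if i =? 0 then Cf y else y i.

Lemma psi1f_step z i : i < l -> psi1f z i = z i + (if S i <? l then psi1f z (S i) else 0).
Proof.
  intro H. unfold psi1f. destruct (Nat.ltb_spec i l); [|lia].
  destruct (Nat.ltb_spec (S i) l).
  - replace (l - i) with (S (l - S i)) by lia. rewrite sumn_shift. rewrite Nat.add_0_r.
    f_equal. apply sumn_ext. intros. f_equal. lia.
  - replace (l - i) with 1 by lia. simpl. rewrite Nat.add_0_r. lia.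
Qed.

Lemma F1 x : LocAf x -> agree (psi1f (phi1f x)) x.
Proof.
  intros [HA HB] i Hi.
  assert (forall d, d <= l -> psi1f (phi1f x) (l - d) = x (l - d)).
  { induction d; intro Hd.
    - unfold psi1f. replace (l - 0) with l by lia. destruct (Nat.ltb_spec l l); [lia|].
      unfold phi1f. destruct (Nat.ltb_spec l (l - 1)); lia.
    - rewrite psi1f_step by lia. destruct (Nat.ltb_spec (S (l - S d)) l).
      + replace (S (l - S d)) with (l - d) by lia. rewrite IHd by lia.
        unfold phi1f. destruct (Nat.ltb_spec (l - S d) (l - 1)).
        * replace (S (l - S d)) with (l - d) by lia.
          assert (x (l - S d + 1) <= x (l - S d)) by (apply HA; lia).
          replace (l - S d + 1) with (l - d) in H1 by lia. lia.
        * lia.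
      + unfold phi1f. destruct (Nat.ltb_spec (l - S d) (l - 1)); [lia|]. lia. }
  replace i with (l - (l - i)) by lia. apply H; lia.
Qed.

Lemma F2 z : agree (phi1f (psi1f z)) z.
Proof.
  intros i Hi. unfold phi1f. destruct (Nat.ltb_spec i (l - 1)).
  - rewrite (psi1f_step z i) by lia. destruct (Nat.ltb_spec (S i) l); lia.
  - unfold psi1f. destruct (Nat.ltb_spec i l).
    + replace (l - i) with 1 by lia. simpl. rewrite Nat.add_0_r. reflexivity.
    + reflexivity.
Qed.

Lemma F3 x : LocAf x -> LocMf (phi1f x).
Proof.
  intros [HA HB]. unfold LocMf, phi1f.
  destruct (Nat.ltb_spec l (l - 1)); [lia|]. destruct (Nat.ltb_spec (l - 1) (l - 1)); [lia|]. auto.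
Qed.

Lemma F4 z : LocMf z -> LocAf (psi1f z).
Proof.
  unfold LocMf. intro H. split.
  - intros i Hi. rewrite (psi1f_step z i) by lia. destruct (Nat.ltb_spec (S i) l); [|lia].
    replace (i + 1) with (S i) by lia. lia.
  - unfold psi1f. destruct (Nat.ltb_spec l l); [lia|]. destruct (Nat.ltb_spec (l - 1) l); [|lia].
    replace (l - (l - 1)) with 1 by lia. simpl. replace (l - 1 + 0) with (l - 1) by lia. lia.
Qed.

Lemma sumn_S f n : sumn f (S n) = sumn f n + f n.
Proof. reflexivity. Qed.

Lemma sum_suffix (z : nat -> nat) n :
  sumn (fun i => sumn (fun j => z (i + j)) (n - i)) n = sumn (fun i => (i + 1) * z i) n.
Proof.
  induction n. reflexivity.
  rewrite !sumn_S. replace (S n - n) with 1 by lia. simpl (sumn _ 1).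
  rewrite (sumn_ext _ (fun i => sumn (fun j => z (i + j)) (n - i) + z n)).
  - assert (forall f g m, sumn (fun i => f i + g i) m = sumn f m + sumn g m).
    { intros f g m; induction m; simpl; lia. }
    rewrite H, IHn. assert (forall m, sumn (fun _ => z n) m = m * z n).
    { induction m; simpl; lia. }
    rewrite H0. rewrite Nat.add_0_r. lia.
  - intros i Hi. replace (S n - i) with (S (n - i)) by lia. rewrite sumn_S. f_equal. f_equal. lia.
Qed.

Lemma F5 z : wAf (psi1f z) = wMf z.
Proof.
  unfold wAf, wMf. f_equal. f_equal.
  - rewrite <- sum_suffix. apply sumn_ext. intros i Hi. unfold psi1f.
    destruct (Nat.ltb_spec i l); [reflexivity|lia].
  - unfold psi1f. destruct (Nat.ltb_spec l l); [lia|reflexivity].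
Qed.

Lemma wAf_agree x y : agree x y -> wAf x = wAf y.
Proof. intro H. unfold wAf. rewrite (sumn_ext x y) by (intros; apply H; lia). rewrite (H l) by lia. lia. Qed.
Lemma wMf_agree x y : agree x y -> wMf x = wMf y.
Proof. intro H. unfold wMf. rewrite (sumn_ext _ (fun i => (i + 1) * y i)) by (intros; rewrite H; lia). rewrite (H l) by lia. lia. Qed.
Lemma wRf_agree x y : agree x y -> wRf x = wRf y.
Proof. intro H. unfold wRf. rewrite (sumn_ext _ (fun i => (i + 2) * y (i + 1))) by (intros; rewrite H; lia). rewrite (H 0) by lia. lia. Qed.
Lemma LocAf_agree x y : agree x y -> LocAf x -> LocAf y.
Proof. intros H [H1 H2]. split. intros i Hi. rewrite <- !H by lia. auto. rewrite <- !H by lia. auto. Qed.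
Lemma LocMf_agree x y : agree x y -> LocMf x -> LocMf y.
Proof. intros H H1. unfold LocMf in *. rewrite <- !H by lia. auto. Qed.
Lemma LocRf_agree x y : agree x y -> LocRf x -> LocRf y.
Proof. intros H H1. unfold LocRf in *. rewrite <- !H by lia. auto. Qed.
Lemma phi1f_agree x y : agree x y -> agree (phi1f x) (phi1f y).
Proof. intros H i Hi. unfold phi1f. destruct (Nat.ltb_spec i (l - 1)); rewrite ?H by lia; auto. Qed.
Lemma psi1f_agree x y : agree x y -> agree (psi1f x) (psi1f y).
Proof. intros H i Hi. unfold psi1f. destruct (Nat.ltb_spec i l); auto. apply sumn_ext. intros; apply H; lia. Qed.
Lemma phi2f_agree x y : agree x y -> agree (phi2f x) (phi2f y).
Proof.
  intros H i Hi. unfold phi2f, E0, D0, D1. rewrite !(H 0), !(H l), !(H (l - 1)) by lia.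
  destruct (i =? 0); auto. destruct (i =? l); auto. destruct (i =? l - 1); auto.
Qed.
Lemma psi2f_agree x y : agree x y -> agree (psi2f x) (psi2f y).
Proof.
  intros H i Hi. unfold psi2f, Af, Bf, Cf. rewrite !(H 0), !(H l), !(H (l - 1)) by lia.
  destruct (i =? l); auto. destruct (i =? l - 1); auto. destruct (i =? 0); auto.
Qed.

Lemma F6 x : LocAf x -> wMf (phi1f x) = wAf x.
Proof. intro H. rewrite <- F5. apply wAf_agree. apply F1; auto. Qed.

Lemma phi2f_0 z : phi2f z 0 = E0 z.
Proof. reflexivity. Qed.
Lemma phi2f_l z : phi2f z l = D1 z.
Proof. unfold phi2f. destruct (Nat.eqb_spec l 0); [lia|]. rewrite Nat.eqb_refl. reflexivity. Qed.
Lemma phi2f_l1 z : 2 <= l -> phi2f z (l - 1) = D0 z.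
Proof. intro H. unfold phi2f. destruct (Nat.eqb_spec (l - 1) 0); [lia|]. destruct (Nat.eqb_spec (l - 1) l); [lia|].
  rewrite Nat.eqb_refl. reflexivity. Qed.
Lemma phi2f_mid z i : i <> 0 -> i <> l -> i <> l - 1 -> phi2f z i = z i.
Proof. intros. unfold phi2f. destruct (Nat.eqb_spec i 0); [lia|]. destruct (Nat.eqb_spec i l); [lia|].
  destruct (Nat.eqb_spec i (l - 1)); [lia|]. reflexivity. Qed.
Lemma psi2f_l y : psi2f y l = Bf y.
Proof. unfold psi2f. rewrite Nat.eqb_refl. reflexivity. Qed.
Lemma psi2f_l1 y : psi2f y (l - 1) = Af y.
Proof. unfold psi2f. destruct (Nat.eqb_spec (l - 1) l); [lia|]. rewrite Nat.eqb_refl. reflexivity. Qed.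
Lemma psi2f_0 y : 2 <= l -> psi2f y 0 = Cf y.
Proof. intro H. unfold psi2f. destruct (Nat.eqb_spec 0 l); [lia|]. destruct (Nat.eqb_spec 0 (l - 1)); [lia|]. reflexivity. Qed.
Lemma psi2f_mid y i : i <> 0 -> i <> l -> i <> l - 1 -> psi2f y i = y i.
Proof. intros. unfold psi2f. destruct (Nat.eqb_spec i l); [lia|]. destruct (Nat.eqb_spec i (l - 1)); [lia|].
  destruct (Nat.eqb_spec i 0); [lia|]. reflexivity. Qed.

Lemma dm k' b : 1 <= k' -> b = k' * (b / k') + b mod k' /\ b mod k' < k'.
Proof. intro H. split. apply Nat.div_mod_eq. apply Nat.mod_upper_bound. lia. Qed.

Lemma G1 z : LocMf z -> LocRf (phi2f z).
Proof.
  intro HM. unfold LocRf. rewrite phi2f_0. unfold E0.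
  destruct (Nat.eqb_spec (z l) (k * z (l - 1))).
  - destruct (Nat.eqb_spec l 1).
    + left. exists 0. lia.
    + left. exists (z 0 mod l). split. apply Nat.mod_upper_bound; lia. lia.
  - right. destruct (Nat.eqb_spec l 1); nia.
Qed.

Lemma G3 y : LocRf y -> LocMf (psi2f y).
Proof.
  intro HR. unfold LocMf. rewrite psi2f_l, psi2f_l1. unfold Af, Bf.
  destruct (Nat.ltb_spec (y 0) (l * k)). lia.
  assert (H1 := dm k (y 0 - l * k) Hk).
  destruct (Nat.eqb_spec l 1); nia.
Qed.

Lemma G2 z : LocMf z -> agree (psi2f (phi2f z)) z.
Proof.
  intros HM i Hi. unfold LocMf in HM.
  set (c0 := z 0) in *. set (a := z (l - 1)) in *. set (b := z l) in *.
  assert (Hb := dm k b Hk). assert (Hc := dm l c0 Hl).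
  assert (YA : Af (phi2f z) = a /\ Bf (phi2f z) = b /\ (2 <= l -> Cf (phi2f z) = c0)).
  { assert (EA : Af (phi2f z) = let e := phi2f z 0 in let v := phi2f z (l - 1) in let w := phi2f z l in
      if e <? l * k then w else (if l =? 1 then 1 + (e - k) / k + w else 1 + v + w)) by reflexivity.
    assert (EB : Bf (phi2f z) = let e := phi2f z 0 in let w := phi2f z l in
      if e <? l * k then k * w else k * w + (e - l * k) mod k) by reflexivity.
    assert (EC : Cf (phi2f z) = let e := phi2f z 0 in let v := phi2f z (l - 1) in
      if e <? l * k then e / k + l * v else (e - l * k) / k) by reflexivity.
    rewrite EA, EB, EC. cbv zeta. rewrite phi2f_0, phi2f_l.
    assert (ED1 : D1 z = if b =? k * a then a else b / k) by reflexivity. rewrite ED1.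
    destruct (Nat.eqb_spec l 1) as [L1|L1].
    - assert (EE0 : E0 z = if b =? k * a then 0 else k + k * (a - 1 - b / k) + b mod k).
      { unfold E0. cbv zeta. rewrite (proj2 (Nat.eqb_eq l 1) L1). reflexivity. }
      rewrite EE0. rewrite L1.
      destruct (Nat.eqb_spec b (k * a)).
      + destruct (Nat.ltb_spec 0 (1 * k)); [|lia]. split; [|split]; auto; lia.
      + destruct (Nat.ltb_spec (k + k * (a - 1 - b / k) + b mod k) (1 * k)); [nia|].
        replace (k + k * (a - 1 - b / k) + b mod k - k) with (k * (a - 1 - b / k) + b mod k) by lia.
        replace (k + k * (a - 1 - b / k) + b mod k - 1 * k) with (k * (a - 1 - b / k) + b mod k) by lia.
        destruct (divmod_eq k (a - 1 - b / k) (b mod k)) as [E1 E2]; [lia|]. rewrite E1, E2.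
        assert (b / k < a) by nia. split; [|split]; lia.
    - assert (L2 : 2 <= l) by lia. rewrite phi2f_l1 by auto.
      assert (EE0 : E0 z = if b =? k * a then k * (c0 mod l) else l * k + k * c0 + b mod k).
      { unfold E0. cbv zeta. rewrite (proj2 (Nat.eqb_neq l 1) L1). reflexivity. }
      assert (ED0 : D0 z = if b =? k * a then c0 / l else a - 1 - b / k) by reflexivity.
      rewrite EE0, ED0.
      destruct (Nat.eqb_spec b (k * a)).
      + destruct (Nat.ltb_spec (k * (c0 mod l)) (l * k)); [|nia].
        replace (k * (c0 mod l) / k) with (c0 mod l) by (rewrite Nat.mul_comm, Nat.div_mul; lia).
        split; [|split]; auto; lia.
      + destruct (Nat.ltb_spec (l * k + k * c0 + b mod k) (l * k)); [lia|].
        replace (l * k + k * c0 + b mod k - l * k) with (k * c0 + b mod k) by lia.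
        destruct (divmod_eq k c0 (b mod k)) as [E1 E2]; [lia|]. rewrite E1, E2.
        assert (b / k < a) by nia. split; [|split]; lia. }
  destruct YA as [YA [YB YC]].
  destruct (Nat.eq_dec i l) as [->|N1]. rewrite psi2f_l; auto.
  destruct (Nat.eq_dec i (l - 1)) as [->|N2]. rewrite psi2f_l1; auto.
  destruct (Nat.eq_dec i 0) as [->|N3]. rewrite psi2f_0 by lia. apply YC; lia.
  rewrite psi2f_mid, phi2f_mid; auto.
Qed.

Lemma G4 y : LocRf y -> agree (phi2f (psi2f y)) y.
Proof.
  intros HR i Hi. unfold LocRf in HR.
  set (e := y 0) in *. set (v := y (l - 1)) in *. set (w := y l) in *.
  assert (He := dm k (e - l * k) Hk).
  assert (EAf : Af y = if e <? l * k then w else (if l =? 1 then 1 + (e - k) / k + w else 1 + v + w)) by reflexivity.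
  assert (EBf : Bf y = if e <? l * k then k * w else k * w + (e - l * k) mod k) by reflexivity.
  assert (ECf : Cf y = if e <? l * k then e / k + l * v else (e - l * k) / k) by reflexivity.
  assert (YE : E0 (psi2f y) = e /\ D1 (psi2f y) = w /\ (2 <= l -> D0 (psi2f y) = v)).
  { assert (EE0 : E0 (psi2f y) = let c0 := psi2f y 0 in let a := psi2f y (l - 1) in let b := psi2f y l in
      if b =? k * a then (if l =? 1 then 0 else k * (c0 mod l))
      else (if l =? 1 then k + k * (a - 1 - b / k) + b mod k else l * k + k * c0 + b mod k)) by reflexivity.
    assert (ED0 : D0 (psi2f y) = let c0 := psi2f y 0 in let a := psi2f y (l - 1) in let b := psi2f y l in
      if b =? k * a then c0 / l else a - 1 - b / k) by reflexivity.
    assert (ED1 : D1 (psi2f y) = let a := psi2f y (l - 1) in let b := psi2f y l in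
      if b =? k * a then a else b / k) by reflexivity.
    rewrite EE0, ED0, ED1. cbv zeta. rewrite psi2f_l, psi2f_l1, EAf, EBf.
    destruct (Nat.eqb_spec l 1) as [L1|L1].
    - rewrite L1 in *.
      destruct (Nat.ltb_spec e (1 * k)).
      + destruct HR as [[j [Hj Ej]]|HR]; [|lia]. assert (j = 0) by lia. subst j.
        rewrite Nat.eqb_refl. split; [|split]; auto; lia.
      + destruct (Nat.eqb_spec (k * w + (e - 1 * k) mod k) (k * (1 + (e - k) / k + w))).
        * replace (e - k) with (e - 1 * k) in * by lia. nia.
        * destruct (divmod_eq k w ((e - 1 * k) mod k)) as [E1 E2]; [lia|]. rewrite E1, E2.
          replace (e - k) with (e - 1 * k) by lia. split; [|split]; [replace (1 + (e - 1 * k) / k + w - 1 - w) with ((e - 1 * k) / k) by lia; nia | lia | lia].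
    - assert (L2 : 2 <= l) by lia. rewrite psi2f_0 by auto. rewrite ECf.
      destruct (Nat.ltb_spec e (l * k)).
      + destruct HR as [[j [Hj Ej]]|HR]; [|lia].
        rewrite Nat.eqb_refl. rewrite Ej. rewrite Nat.div_mul by lia.
        destruct (divmod_eq l v j) as [E1 E2]; [lia|].
        replace (j + l * v) with (l * v + j) by lia. rewrite E1, E2. split; [|split]; auto; lia.
      + destruct (Nat.eqb_spec (k * w + (e - l * k) mod k) (k * (1 + v + w))); [nia|].
        destruct (divmod_eq k w ((e - l * k) mod k)) as [E1 E2]; [lia|]. rewrite E1, E2.
        split; [|split]; lia. }
  destruct YE as [YE [YD1 YD0]].
  destruct (Nat.eq_dec i 0) as [->|N1]. rewrite phi2f_0; auto.
  destruct (Nat.eq_dec i l) as [->|N2]. rewrite phi2f_l; auto.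
  destruct (Nat.eq_dec i (l - 1)) as [->|N3]. rewrite phi2f_l1 by lia. apply YD0; lia.
  rewrite phi2f_mid, psi2f_mid; auto.
Qed.

Lemma G5 z : LocMf z -> wRf (phi2f z) = wMf z.
Proof.
  intro HM. unfold LocMf in HM. unfold wRf, wMf.
  set (c0 := z 0) in *. set (a := z (l - 1)) in *. set (b := z l) in *.
  assert (Hb := dm k b Hk). assert (Hc := dm l c0 Hl).
  rewrite phi2f_0.
  assert (ED1 : D1 z = if b =? k * a then a else b / k) by reflexivity.
  destruct (Nat.eq_dec l 1) as [L1|L1].
  - assert (EE0 : E0 z = if b =? k * a then 0 else k + k * (a - 1 - b / k) + b mod k).
    { unfold E0. cbv zeta. rewrite (proj2 (Nat.eqb_eq l 1) L1). reflexivity. }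
    assert (Ea : a = c0) by (unfold a, c0; rewrite L1; reflexivity).
    assert (S1 : sumn (fun i => (i + 2) * phi2f z (i + 1)) l = 2 * D1 z).
    { rewrite L1. simpl. rewrite <- L1, phi2f_l. lia. }
    assert (S2 : sumn (fun i => (i + 1) * z i) l = a).
    { rewrite L1. simpl. rewrite Ea. unfold c0. lia. }
    rewrite S1, S2, EE0, ED1.
    destruct (Nat.eqb_spec b (k * a)). lia. assert (b / k < a) by nia. nia.
  - assert (EE0 : E0 z = if b =? k * a then k * (c0 mod l) else l * k + k * c0 + b mod k).
    { unfold E0. cbv zeta. rewrite (proj2 (Nat.eqb_neq l 1) L1). reflexivity. }
    assert (ED0 : D0 z = if b =? k * a then c0 / l else a - 1 - b / k) by reflexivity.
    destruct (le_lt_dec 2 l) as [L2|L2]; [|lia].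
    set (m := l - 2).
    assert (S1 : sumn (fun i => (i + 2) * phi2f z (i + 1)) l =
       sumn (fun i => (S i + 1) * z (S i)) m + l * D0 z + (l + 1) * D1 z).
    { replace l with (S (S m)) at 1 by lia. rewrite !sumn_S. f_equal. f_equal.
      - apply sumn_ext. intros i Hi. rewrite phi2f_mid by lia. f_equal; [lia|f_equal; lia].
      - replace (m + 1) with (l - 1) by lia. rewrite phi2f_l1 by lia. f_equal. lia.
      - replace (S m + 1) with l by lia. rewrite phi2f_l. f_equal. lia. }
    assert (S2 : sumn (fun i => (i + 1) * z i) l =
       c0 + sumn (fun i => (S i + 1) * z (S i)) m + l * a).
    { replace l with (S (S m)) at 1 by lia. rewrite sumn_S, sumn_shift. unfold c0, a.
      replace (S m) with (l - 1) by lia. simpl. lia. }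
    rewrite S1, S2, EE0, ED0, ED1.
    destruct (Nat.eqb_spec b (k * a)).
    + nia.
    + assert (b / k < a) by nia. nia.
Qed.

End Local.

Definition vec (x : list nat) : nat -> nat := fun i => nth i x 0.
Definition tolist (n : nat) (f : nat -> nat) : list nat := map f (seq 0 n).

Lemma length_tolist n f : length (tolist n f) = n.
Proof. unfold tolist. rewrite length_map, length_seq. auto. Qed.

Lemma vec_tolist n f i : i < n -> vec (tolist n f) i = f i.
Proof.
  intro H. unfold vec, tolist. rewrite nth_indep with (d' := f 0) by (rewrite length_map, length_seq; auto).
  rewrite map_nth, seq_nth; auto.
Qed.

Lemma tolist_vec x : tolist (length x) (vec x) = x.
Proof.
  apply nth_ext with (d := 0) (d' := 0). rewrite length_tolist; auto.
  intros n Hn. rewrite length_tolist in Hn. fold (vec (tolist (length x) (vec x)) n). rewrite vec_tolist; auto.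
Qed.

Lemma tolist_agree l f g : agree l f g -> tolist (S l) f = tolist (S l) g.
Proof. intro H. unfold tolist. apply map_ext_in. intros a Ha. apply in_seq in Ha. apply H. lia. Qed.

Lemma agree_vec_tolist l f : agree l (vec (tolist (S l) f)) f.
Proof. intros i Hi. apply vec_tolist. lia. Qed.

Lemma agree_trans l f g h : agree l f g -> agree l g h -> agree l f h.
Proof. intros H1 H2 i Hi. rewrite H1, H2; auto. Qed.
Lemma agree_sym l f g : agree l f g -> agree l g f.
Proof. intros H i Hi. rewrite H; auto. Qed.

Section LocList.
Variables k l : nat.
Hypothesis Hk : 1 <= k.
Hypothesis Hl : 1 <= l.

Definition phiL (x : list nat) : list nat := tolist (S l) (phi2f k l (phi1f l (vec x))).
Definition psiL (y : list nat) : list nat := tolist (S l) (psi1f l (psi2f k l (vec y))).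
Definition LocA (x : list nat) := LocAf k l (vec x).
Definition LocR (y : list nat) := LocRf k l (vec y).

Lemma phiL_spec x : length x = S l -> LocA x ->
  length (phiL x) = S l /\ LocR (phiL x) /\ psiL (phiL x) = x.
Proof.
  intros Hlen HA. unfold LocA in HA.
  assert (HM := F3 k l Hk Hl _ HA).
  split; [apply length_tolist|split].
  - unfold LocR, phiL. apply (LocRf_agree k l Hk Hl (phi2f k l (phi1f l (vec x)))).
    apply agree_sym, agree_vec_tolist. apply (G1 k l Hk Hl); auto.
  - unfold psiL, phiL. transitivity (tolist (S l) (vec x)); [|rewrite <- Hlen; apply tolist_vec].
    apply tolist_agree.
    eapply agree_trans. apply (psi1f_agree k l Hk Hl). apply (psi2f_agree k l Hk Hl). apply agree_vec_tolist.
    eapply agree_trans. apply (psi1f_agree k l Hk Hl). apply (G2 k l Hk Hl); auto.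
    apply (F1 k l Hk Hl); auto.
Qed.

Lemma psiL_spec y : length y = S l -> LocR y ->
  length (psiL y) = S l /\ LocA (psiL y) /\ phiL (psiL y) = y.
Proof.
  intros Hlen HR. unfold LocR in HR.
  assert (HM := G3 k l Hk Hl _ HR).
  split; [apply length_tolist|split].
  - unfold LocA, psiL. apply (LocAf_agree k l Hk Hl (psi1f l (psi2f k l (vec y)))).
    apply agree_sym, agree_vec_tolist. apply (F4 k l Hk Hl); auto.
  - unfold psiL, phiL. transitivity (tolist (S l) (vec y)); [|rewrite <- Hlen; apply tolist_vec].
    apply tolist_agree.
    eapply agree_trans. apply (phi2f_agree k l Hk Hl). apply (phi1f_agree k l Hk Hl). apply agree_vec_tolist.
    eapply agree_trans. apply (phi2f_agree k l Hk Hl). apply (F2 k l Hk Hl).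
    apply (G4 k l Hk Hl); auto.
Qed.

Lemma phiL_weight x : LocA x -> wRf k l (vec (phiL x)) = wAf k l (vec x).
Proof.
  intro HA. unfold LocA in HA. unfold phiL.
  rewrite (wRf_agree k l Hk Hl _ (phi2f k l (phi1f l (vec x)))) by apply agree_vec_tolist.
  rewrite (G5 k l Hk Hl) by (auto; apply (F3 k l Hk Hl); auto). apply (F6 k l Hk Hl); auto.
Qed.

Lemma vec_repeat0 m : forall i, vec (repeat 0 m) i = 0.
Proof. intro i. unfold vec. revert i; induction m; intros [|i]; simpl; auto. Qed.

Lemma tolist_zero f : agree l f (fun _ => 0) -> forall j, nth j (tolist (S l) f) 0 = 0.
Proof.
  intros H j. destruct (le_lt_dec (S l) j).
  - apply nth_overflow. rewrite length_tolist; auto.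
  - fold (vec (tolist (S l) f) j). rewrite vec_tolist by auto. apply H. lia.
Qed.

Lemma phiL_zero m j : nth j (phiL (repeat 0 m)) 0 = 0.
Proof.
  apply tolist_zero. intros i Hi.
  assert (Z1 : agree l (phi1f l (vec (repeat 0 m))) (fun _ => 0)).
  { intros i' Hi'. unfold phi1f. rewrite !vec_repeat0. destruct (i' <? l - 1); auto. }
  rewrite (phi2f_agree k l Hk Hl _ _ Z1) by auto.
  unfold phi2f, E0, D0, D1. cbv zeta. rewrite Nat.mul_0_r, Nat.eqb_refl, Nat.Div0.mod_0_l, Nat.Div0.div_0_l, Nat.mul_0_r.
  destruct (i =? 0); destruct (l =? 1); destruct (i =? l); destruct (i =? l - 1); auto.
Qed.

Lemma psiL_zero m j : nth j (psiL (repeat 0 m)) 0 = 0.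
Proof.
  apply tolist_zero. intros i Hi.
  assert (Z1 : agree l (psi2f k l (vec (repeat 0 m))) (fun _ => 0)).
  { intros i' Hi'. unfold psi2f, Af, Bf, Cf. cbv zeta. rewrite !vec_repeat0.
    assert (0 <? l * k = true) by (apply Nat.ltb_lt; nia). rewrite H.
    rewrite Nat.Div0.div_0_l, !Nat.mul_0_r.
    destruct (i' =? l); destruct (i' =? l - 1); destruct (i' =? 0); auto. }
  rewrite (psi1f_agree k l Hk Hl _ _ Z1) by auto.
  unfold psi1f. destruct (i <? l); auto. clear. induction (l - i); simpl; lia.
Qed.

End LocList.

Local Open Scope nat_scope.

Definition logn := prime.logn.
Definition isprime p := prime.prime p = true.

Definition loc (p : nat) (t : list nat) : list nat := map (logn p) t.
Definition prodl (t : list nat) : nat := fold_right Nat.mul 1 t.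
Definition lift (h : list nat -> list nat) (n : nat) (t : list nat) : list nat :=
  map (fun j => NT.build (fun p => nth j (h (loc p t)) 0) (S (prodl t))) (seq 0 n).

Definition allpos (t : list nat) := forall x, In x t -> 0 < x.

Lemma logn0 p : logn p 0 = 0.
Proof. apply prime.logn0. Qed.

Lemma prodl_pos t : allpos t -> 0 < prodl t.
Proof. induction t; simpl; intro H. lia. apply Nat.mul_pos_pos. apply H; left; auto. apply IHt. intros x Hx; apply H; right; auto. Qed.

Lemma prodl_ge t : allpos t -> forall x, In x t -> x <= prodl t.
Proof.
  induction t; simpl; intros H x Hx. contradiction.
  assert (0 < a) by (apply H; left; auto).
  assert (0 < prodl t) by (apply prodl_pos; intros y Hy; apply H; right; auto).
  destruct Hx as [->|Hx]. nia. assert (x <= prodl t) by (apply IHt; auto; intros y Hy; apply H; right; auto). nia.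
Qed.

Lemma loc_big t p : allpos t -> prodl t < p -> loc p t = repeat 0 (length t).
Proof.
  intros H Hp. unfold loc. apply nth_ext with (d := 0) (d' := 0).
  rewrite length_map, repeat_length; auto.
  intros n Hn. rewrite length_map in Hn. rewrite nth_repeat_lt by auto.
  rewrite nth_indep with (d' := logn p 0) by (rewrite length_map; auto). rewrite map_nth.
  apply NT.logn_big. apply H, nth_In; auto.
  assert (nth n t 0 <= prodl t) by (apply prodl_ge; auto; apply nth_In; auto). lia.
Qed.

Lemma lift_length h n t : length (lift h n t) = n.
Proof. unfold lift. rewrite length_map, length_seq. auto. Qed.

Lemma lift_pos h n t : allpos (lift h n t).
Proof. intros x Hx. unfold lift in Hx. apply in_map_iff in Hx. destruct Hx as [j [<- _]]. apply NT.build_pos. Qed.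

Lemma nth_lift h n t j : j < n -> nth j (lift h n t) 0 = NT.build (fun p => nth j (h (loc p t)) 0) (S (prodl t)).
Proof.
  intro H. unfold lift. set (f := fun j => NT.build (fun p => nth j (h (loc p t)) 0) (S (prodl t))).
  rewrite nth_indep with (d' := f 0) by (rewrite length_map, length_seq; auto).
  rewrite map_nth, seq_nth; auto.
Qed.

Definition zero_pres (h : list nat -> list nat) := forall m j, nth j (h (repeat 0 m)) 0 = 0.

Lemma lift_logn h n t p j : allpos t -> zero_pres h -> isprime p -> j < n ->
  logn p (nth j (lift h n t) 0) = nth j (h (loc p t)) 0.
Proof.
  intros Ht Hz Hp Hj. rewrite nth_lift by auto. unfold logn. rewrite NT.logn_build by auto.
  destruct (Nat.ltb_spec p (S (prodl t))); auto.
  rewrite loc_big; auto.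
Qed.

Lemma vec_loc p t i : vec (loc p t) i = logn p (nth i t 0).
Proof.
  unfold vec, loc. destruct (le_lt_dec (length t) i).
  - rewrite !nth_overflow by (rewrite ?length_map; auto). symmetry; apply logn0.
  - rewrite nth_indep with (d' := logn p 0) by (rewrite length_map; auto). apply map_nth.
Qed.

Lemma loc_lift h n t p : allpos t -> zero_pres h -> isprime p -> length (h (loc p t)) = n ->
  loc p (lift h n t) = h (loc p t).
Proof.
  intros Ht Hz Hp Hn. apply nth_ext with (d := 0) (d' := 0).
  unfold loc at 1. rewrite length_map, lift_length; auto.
  intros j Hj. unfold loc at 1 in Hj. rewrite length_map, lift_length in Hj.
  fold (vec (loc p (lift h n t)) j). rewrite vec_loc. apply lift_logn; auto.
Qed.

Lemma eq_by_loc t t' : length t = length t' -> allpos t -> allpos t' ->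
  (forall p, isprime p -> loc p t = loc p t') -> t = t'.
Proof.
  intros Hl Ht Ht' H. apply nth_ext with (d := 0) (d' := 0); auto.
  intros n Hn. apply NT.eq_from_log.
  - apply Ht, nth_In; auto.
  - apply Ht', nth_In; lia.
  - intros p Hp. specialize (H p Hp). fold (logn p (nth n t 0)) (logn p (nth n t' 0)).
    rewrite <- !vec_loc. rewrite H. reflexivity.
Qed.

Section Glob.
Variables k l : nat.
Hypothesis Hk : 1 <= k.
Hypothesis Hl : 1 <= l.

Definition GA (t : list nat) := length t = S l /\ allpos t /\ forall p, isprime p -> LocA k l (loc p t).
Definition GB (y : list nat) := length y = S l /\ allpos y /\ forall p, isprime p -> LocR k l (loc p y).
Definition Phi := lift (phiL k l) (S l).
Definition Psi := lift (psiL k l) (S l).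

Lemma zp_phi : zero_pres (phiL k l).
Proof. intros m j. apply phiL_zero; auto. Qed.
Lemma zp_psi : zero_pres (psiL k l).
Proof. intros m j. apply psiL_zero; auto. Qed.

Lemma loc_len p t : length (loc p t) = length t.
Proof. unfold loc; apply length_map. Qed.

Lemma Phi_GB t : GA t -> GB (Phi t) /\ Psi (Phi t) = t.
Proof.
  intros [H1 [H2 H3]].
  assert (LP : forall p, isprime p -> loc p (Phi t) = phiL k l (loc p t)).
  { intros p Hp. apply loc_lift; auto. apply zp_phi. apply (phiL_spec k l Hk Hl); auto. rewrite loc_len; auto. }
  assert (GBt : GB (Phi t)).
  { split; [apply lift_length|split; [apply lift_pos|]].
    intros p Hp. rewrite LP by auto. apply (phiL_spec k l Hk Hl); auto. rewrite loc_len; auto. }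
  split; auto.
  apply eq_by_loc; auto. unfold Psi; rewrite lift_length; auto. apply lift_pos.
  intros p Hp. unfold Psi. rewrite loc_lift; auto.
  - rewrite LP by auto. apply (phiL_spec k l Hk Hl); auto. rewrite loc_len; auto.
  - apply lift_pos.
  - apply zp_psi.
  - apply (psiL_spec k l Hk Hl). rewrite loc_len. apply lift_length. apply GBt; auto.
Qed.

Lemma Psi_GA y : GB y -> GA (Psi y) /\ Phi (Psi y) = y.
Proof.
  intros [H1 [H2 H3]].
  assert (LP : forall p, isprime p -> loc p (Psi y) = psiL k l (loc p y)).
  { intros p Hp. apply loc_lift; auto. apply zp_psi. apply (psiL_spec k l Hk Hl); auto. rewrite loc_len; auto. }
  assert (GAy : GA (Psi y)).
  { split; [apply lift_length|split; [apply lift_pos|]].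
    intros p Hp. rewrite LP by auto. apply (psiL_spec k l Hk Hl); auto. rewrite loc_len; auto. }
  split; auto.
  apply eq_by_loc; auto. unfold Phi; rewrite lift_length; auto. apply lift_pos.
  intros p Hp. unfold Phi. rewrite loc_lift; auto.
  - rewrite LP by auto. apply (psiL_spec k l Hk Hl); auto. rewrite loc_len; auto.
  - apply lift_pos.
  - apply zp_phi.
  - apply (phiL_spec k l Hk Hl). rewrite loc_len. apply lift_length. apply GAy; auto.
Qed.

Lemma Phi_value (VA VB : list nat -> nat) t :
  GA t -> 0 < VA t -> 0 < VB (Phi t) ->
  (forall p, isprime p -> logn p (VA t) = wAf k l (vec (loc p t))) ->
  (forall p, isprime p -> logn p (VB (Phi t)) = wRf k l (vec (loc p (Phi t)))) ->
  VA t = VB (Phi t).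
Proof.
  intros [H1 [H2 H3]] Ha Hb HA HB. apply NT.eq_from_log; auto.
  intros p Hp. fold (logn p (VA t)) (logn p (VB (Phi t))). rewrite HA, HB by auto.
  unfold Phi. rewrite loc_lift; auto. symmetry. apply phiL_weight; auto.
  apply zp_phi. apply (phiL_spec k l Hk Hl); auto. rewrite loc_len; auto.
Qed.

End Glob.

Open Scope R_scope.

Lemma sum_firstn (L : list nat) n : (n <= length L)%nat ->
  fold_right Nat.add 0%nat (firstn n L) = sumn (fun i => nth i L 0%nat) n.
Proof.
  revert n; induction L as [|a L IH]; intros n Hn.
  - simpl in Hn. assert (n = 0%nat) by lia. subst. reflexivity.
  - destruct n. reflexivity. simpl firstn. simpl fold_right. rewrite sumn_shift. simpl nth.
    rewrite IH by (simpl in Hn; lia). reflexivity.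
Qed.

Lemma in_firstn (x : nat) n L : In x (firstn n L) -> In x L.
Proof. intro H. rewrite <- (firstn_skipn n L). apply in_or_app; auto. Qed.

Lemma prodpow_pos k (L : list nat) : allpos L -> (0 < fold_right Nat.mul 1%nat (map (fun n => Nat.pow n k) L))%nat.
Proof.
  induction L as [|a L IH]; intro HL; simpl. lia.
  apply Nat.mul_pos_pos. apply Nat.neq_0_lt_0, Nat.pow_nonzero. specialize (HL a (or_introl eq_refl)). lia.
  apply IH. intros x Hx; apply HL; right; auto.
Qed.

Lemma logn_prodpow p k (L : list nat) : allpos L ->
  logn p (fold_right Nat.mul 1%nat (map (fun n => Nat.pow n k) L)) = (k * fold_right Nat.add 0%nat (map (logn p) L))%nat.
Proof.
  induction L as [|a L IH]; intro HL; simpl.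
  - unfold logn. rewrite prime.logn1. lia.
  - assert (Ha : (0 < a)%nat) by (apply HL; left; auto).
    assert (HL' : allpos L) by (intros x Hx; apply HL; right; auto).
    unfold logn in *. rewrite NT.logn_mul.
    + rewrite NT.logn_pow, IH by auto. lia.
    + apply Nat.neq_0_lt_0, Nat.pow_nonzero. lia.
    + apply prodpow_pos; auto.
Qed.

Lemma logn_pval p k a n ds : length ds = n -> allpos ds ->
  logn p (pval k (seq a n) ds) = (k * sumn (fun i => (i + a) * logn p (nth i ds 0%nat)) n)%nat.
Proof.
  revert a ds; induction n; intros a ds Hl Hp.
  - simpl. unfold logn; rewrite prime.logn1. lia.
  - destruct ds as [|d ds]; simpl in Hl; try discriminate. injection Hl as Hl.
    assert (Hd : (0 < d)%nat) by (apply Hp; left; auto).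
    assert (Hp' : allpos ds) by (intros x Hx; apply Hp; right; auto).
    simpl pval. unfold logn in *. rewrite NT.logn_mul.
    + rewrite NT.logn_pow, IHn by auto. rewrite sumn_shift. simpl nth.
      rewrite (sumn_ext (fun i => (S i + a) * prime.logn p (nth i ds 0))%nat (fun i => (i + S a) * prime.logn p (nth i ds 0))%nat)
        by (intros; f_equal; lia).
      lia.
    + apply Nat.neq_0_lt_0, Nat.pow_nonzero. lia.
    + apply pval_pos. auto.
Qed.

Section Final.
Variables k l : nat.
Hypothesis Hk : (1 <= k)%nat.
Hypothesis Hl : (1 <= l)%nat.

Lemma allpos_nth (t : list nat) : length t = S l -> (allpos t <-> forall i, (i < S l)%nat -> (0 < nth i t 0)%nat).
Proof.
  intro Hlen. split.
  - intros H i Hi. apply H, nth_In. lia.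
  - intros H x Hx. apply In_nth with (d := 0%nat) in Hx. destruct Hx as [i [Hi <-]]. apply H. lia.
Qed.

Lemma pow_pos (a : nat) : (0 < a)%nat -> (0 < a ^ k)%nat.
Proof. intro. apply Nat.neq_0_lt_0, Nat.pow_nonzero. lia. Qed.

Lemma tuple_GA t : tuple_set k l t <-> GA k l t.
Proof.
  unfold tuple_set, GA. split.
  - intros [H1 [H2 [H3 H4]]].
    assert (HP : allpos t) by (apply (allpos_nth t H1); auto).
    split; auto. split; auto. intros p Hp. unfold LocA, LocAf. split.
    + intros i Hi. rewrite !vec_loc.
      specialize (H4 i ltac:(lia)).
      assert (A1 : (0 < nth (S i) t 0 ^ k)%nat) by (apply pow_pos, H2; lia).
      assert (A2 : (0 < nth i t 0 ^ k)%nat) by (apply pow_pos, H2; lia).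
      specialize (proj1 (NT.dvd_log _ _ A1 A2) H4 p Hp). intro H5.
      unfold logn. rewrite !NT.logn_pow in H5. replace (i + 1)%nat with (S i) by lia. nia.
    + rewrite !vec_loc.
      assert (A1 : (0 < nth l t 0)%nat) by (apply H2; lia).
      assert (A2 : (0 < nth (l - 1) t 0 ^ k)%nat) by (apply pow_pos, H2; lia).
      specialize (proj1 (NT.dvd_log _ _ A1 A2) H3 p Hp). intro H5.
      unfold logn. rewrite !NT.logn_pow in H5. lia.
  - intros [H1 [H2 H3]].
    assert (HP : forall i, (i < S l)%nat -> (0 < nth i t 0)%nat) by (apply (allpos_nth t H1); auto).
    split; auto. split; auto. split.
    + assert (A1 : (0 < nth l t 0)%nat) by (apply HP; lia).
      assert (A2 : (0 < nth (l - 1) t 0 ^ k)%nat) by (apply pow_pos, HP; lia).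
      apply (NT.dvd_log _ _ A1 A2).
      intros p Hp. destruct (H3 p Hp) as [_ Hb]. rewrite !vec_loc in Hb. rewrite NT.logn_pow. apply Hb.
    + intros i Hi.
      assert (A1 : (0 < nth (S i) t 0 ^ k)%nat) by (apply pow_pos, HP; lia).
      assert (A2 : (0 < nth i t 0 ^ k)%nat) by (apply pow_pos, HP; lia).
      apply (NT.dvd_log _ _ A1 A2).
      intros p Hp. destruct (H3 p Hp) as [Ha _]. specialize (Ha i ltac:(lia)). rewrite !vec_loc in Ha.
      rewrite !NT.logn_pow. replace (i + 1)%nat with (S i) in Ha by lia. unfold logn in Ha. nia.
Qed.

Lemma step_powerful_iff m : (0 < m)%nat ->
  (step_powerful k l m <-> forall p, isprime p -> (exists j, (j < l)%nat /\ logn p m = (j * k)%nat) \/ (l * k <= logn p m)%nat).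
Proof.
  intro Hm. unfold step_powerful. split.
  - intros [_ H] p Hp. apply (H p). apply NT.nat_prime_iff; auto. apply NT.ord_is_log; auto.
  - intro H. split; auto. intros p e Hp He. apply NT.nat_prime_iff in Hp. apply NT.ord_is_log in He; auto.
    subst e. apply H; auto.
Qed.

Definition VB (y : list nat) : nat := (hd 0 y * pval k (seq 2 l) (tl y))%nat.

Lemma GB_iff y : GB k l y <-> (step_powerful k l (hd 0%nat y) /\ Pset (seq 2 l) (tl y) /\ y = hd 0%nat y :: tl y).
Proof.
  unfold GB. split.
  - intros [H1 [H2 H3]]. destruct y as [|m ds]; simpl in H1; try discriminate. simpl.
    assert (Hm : (0 < m)%nat) by (apply H2; left; auto).
    split; [|split; [split|reflexivity]].
    + apply (proj2 (step_powerful_iff m Hm)). intros p Hp. specialize (H3 p Hp). unfold LocR, LocRf in H3.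
      rewrite vec_loc in H3. simpl in H3. exact H3.
    + rewrite length_seq. lia.
    + intros d Hd. apply H2. right. auto.
  - intros [H1 [[H2 H3] H4]]. destruct y as [|m ds]. simpl in H1. destruct H1; lia. simpl in *.
    split. rewrite H2, length_seq. reflexivity. split.
    + intros x [<-|Hx]. apply H1. apply H3; auto.
    + intros p Hp. unfold LocR, LocRf. change (vec (logn p m :: loc p ds) 0) with (logn p m). apply (proj1 (step_powerful_iff m (proj1 H1)) H1); auto.
Qed.

Lemma VB_pos y : GB k l y -> (0 < VB y)%nat.
Proof.
  intro H. apply GB_iff in H. destruct H as [H1 [[_ H2] _]]. unfold VB. apply Nat.mul_pos_pos.
  apply H1. apply pval_pos; auto.
Qed.

Lemma VB_log y p : GB k l y -> isprime p -> logn p (VB y) = wRf k l (vec (loc p y)).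
Proof.
  intros H Hp. apply GB_iff in H. destruct H as [H1 [[H2 H3] H4]].
  destruct y as [|m ds]; [discriminate|]. cbn [hd tl] in *.
  unfold VB. cbn [hd tl]. unfold logn at 1. rewrite NT.logn_mul.
  2:{ apply H1. } 2:{ apply pval_pos; auto. }
  fold (logn p m) (logn p (pval k (seq 2 l) ds)).
  rewrite logn_pval by (rewrite ?H2, ?length_seq; auto).
  unfold wRf. rewrite vec_loc. simpl nth. f_equal. f_equal. apply sumn_ext. intros i Hi. rewrite vec_loc.
  replace (i + 1)%nat with (S i) by lia. simpl nth. reflexivity.
Qed.

Definition VA (t : list nat) : nat := (fold_right Nat.mul 1 (map (fun n => n ^ k) (firstn l t)) * nth l t 0)%nat.

Lemma VA_pos t : GA k l t -> (0 < VA t)%nat.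
Proof.
  intros [H1 [H2 _]]. unfold VA. apply Nat.mul_pos_pos.
  - apply prodpow_pos. intros x Hx; apply H2; apply in_firstn in Hx; auto.
  - apply H2, nth_In. lia.
Qed.

Lemma VA_log t p : GA k l t -> isprime p -> logn p (VA t) = wAf k l (vec (loc p t)).
Proof.
  intros [H1 [H2 _]] Hp. unfold VA. unfold logn at 1. rewrite NT.logn_mul.
  - fold (logn p (nth l t 0%nat)). 
    rewrite logn_prodpow by (intros x Hx; apply H2; apply in_firstn in Hx; auto).
    unfold wAf. rewrite vec_loc. f_equal. f_equal.
    rewrite <- firstn_map. rewrite sum_firstn. apply sumn_ext. intros i Hi. fold (loc p t). reflexivity.
    rewrite length_map. lia.
  - apply prodpow_pos. intros x Hx; apply H2; apply in_firstn in Hx; auto.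
  - apply H2, nth_In. lia.
Qed.

End Final.

Theorem theorem10 (k l : nat) (s : C) :
  (0 < k)%nat -> (0 < l)%nat -> (1 < Re s)%R ->
  has_sum (tuple_term k l s) (tuple_set k l) (Cmult (F_kl k l s) (zeta_prod k l s)).
Proof.
  intros Hk0 Hl0 Hs.
  assert (Hk : (1 <= k)%nat) by lia. assert (Hl : (1 <= l)%nat) by lia.
  destruct (summable_nat (fun n => cpow_neg n s) (step_powerful k l) (Re s) Hs) as [F1 [a' F2]].
  { intros x Hx. apply Hx. }
  { intros x Hx. apply Cmod_cpow_neg. apply Hx. }
  destruct (Pzeta k s (seq 2 l) Hk Hs) as [Z1 [b' Z2]].
  { intros j Hj. apply in_seq in Hj. lia. }
  assert (PR := has_sum_prod natdec listdec _ _ _ _ _ _ a' b' F1 Z1 F2 Z2).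
  assert (GBsum : has_sum (fun y => cpow_neg (VB k l y) s) (GB k l) (Cmult (F_kl k l s) (zeta_prod k l s))).
  { eapply has_sum_reindex with (phi := fun y => (hd 0%nat y, tl y)) (psi := fun p => fst p :: snd p)
      (S' := fun p => step_powerful k l (fst p) /\ Pset (seq 2 l) (snd p))
      (g := fun p => Cmult (cpow_neg (fst p) s) (cpow_neg (pval k (seq 2 l) (snd p)) s)).
    - intros y Hy. apply (GB_iff k l Hk Hl) in Hy. simpl. tauto.
    - intros [m ds] [H1 H2]. apply (GB_iff k l Hk Hl). simpl. auto.
    - intros y Hy. apply (GB_iff k l Hk Hl) in Hy. simpl. destruct Hy as [_ [_ E]]. symmetry; exact E.
    - intros [m ds] _. reflexivity.
    - intros y Hy. apply (GB_iff k l Hk Hl) in Hy. destruct Hy as [H1 [[_ H2] _]]. simpl.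
      unfold VB. apply cpow_neg_mult. apply H1. apply pval_pos; auto.
    - exact PR. }
  eapply has_sum_reindex with (phi := Phi k l) (psi := Psi k l) (S' := GB k l)
    (g := fun y => cpow_neg (VB k l y) s).
  - intros t Ht. apply (tuple_GA k l Hk Hl) in Ht. apply (Phi_GB k l Hk Hl); auto.
  - intros y Hy. apply (tuple_GA k l Hk Hl). apply (Psi_GA k l Hk Hl); auto.
  - intros t Ht. apply (tuple_GA k l Hk Hl) in Ht. apply (Phi_GB k l Hk Hl); auto.
  - intros y Hy. apply (Psi_GA k l Hk Hl); auto.
  - intros t Ht. apply (tuple_GA k l Hk Hl) in Ht.
    assert (HGB : GB k l (Phi k l t)) by (apply (Phi_GB k l Hk Hl); auto).
    unfold tuple_term. f_equal.
    change (VA k l t = VB k l (Phi k l t)).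
    apply (Phi_value k l Hk Hl); auto.
    + apply (VA_pos k l Hk Hl); auto.
    + apply (VB_pos k l Hk Hl); auto.
    + intros p Hp. apply (VA_log k l Hk Hl); auto.
    + intros p Hp. apply (VB_log k l Hk Hl); auto.
  - exact GBsum.
Qed.
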